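(* For every closed point $v$ of $\mathscr C$, $$\sum_{(e_0,\boldsymbol e,\boldsymbol f)\in\{0,1\}^7}\mu^0_S(e_0,\boldsymbol e,\boldsymbol f)\,\mathrm{fact}_v(e_0,\boldsymbol e,\boldsymbol f)=\sum_{(e_0,\boldsymbol e,\boldsymbol f)\in\{0,1\}^7}\mu^0_S(e_0,\boldsymbol e,\boldsymbol f)\,\mathrm{dens}_{S,v}(e_0,\boldsymbol e,\boldsymbol f).$$
   Context: $k$ is a finite field, $\mathscr C$ a smooth projective geometrically integral curve over $k$; for a closed point $v$, $\kappa_v$ is its residue field and $q_v=\#\kappa_v$. Elements of $\{0,1\}^7$ are written $(e_0,\boldsymbol e,\boldsymbol f)$, $\boldsymbol e=(e_1,e_2,e_3)$, $\boldsymbol f=(f_1,f_2,f_3)$; $i,j\in\{1,2,3\}$. Let $\{0,1\}^7_S$ be the set of $(e_0,\boldsymbol e,\boldsymbol f)$ with $\min\big((\sum_{j\neq i}e_j+\sum_jf_j)_i,(e_0+\sum_{j\neq i}(e_j+f_j))_i,e_0+\sum_ie_i\big)=0$. Let $\operatorname{Div}_{S,\mathrm{prim}}$ be the set of $(\mathcal E_0,\mathcal E_1,\mathcal E_2,\mathcal E_3,\mathcal F_1,\mathcal F_2,\mathcal F_3)\in\operatorname{Div}_{\mathrm{eff}}(\mathscr C)^7$ for which the gcd (minimum of multiplicities at each closed point) of $\sum_{j\neq i}\mathcal E_j+\sum_j\mathcal F_j$ ($i=1,2,3$), $\mathcal E_0+\sum_{j\neq i}(\mathcal E_j+\mathcal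 F_j)$ ($i=1,2,3$) and $\mathcal E_0+\sum_i\mathcal E_i$ is $0$; $\mu_S$ is the unique function on $\operatorname{Div}_{\mathrm{eff}}(\mathscr C)^7$ with $\mathbf 1_{\operatorname{Div}_{S,\mathrm{prim}}}(\boldsymbol{\mathcal D})=\sum_{0\leq\boldsymbol{\mathcal E}\leq\boldsymbol{\mathcal D}}\mu_S(\boldsymbol{\mathcal E})$; and for $\boldsymbol n\in\{0,1\}^7$, $\mu^0_S(\boldsymbol n)=\mu_S((n_\alpha v)_\alpha)$, which is independent of the closed point $v$ (equivalently, $\mu^0_S$ is the unique function on $\{0,1\}^7$ with $\mathbf 1_{\{0,1\}^7_S}(\boldsymbol n)=\sum_{\boldsymbol m\leq\boldsymbol n}\mu^0_S(\boldsymbol m)$). For $\boldsymbol\nu\in\mathbf N^3$, $F_{\boldsymbol\nu}(\rho,\boldsymbol T)=\sum_{\boldsymbol n\in\mathbf N^3}\rho^{\min_i(n_i+\nu_i)}\prod_iT_i^{n_i}$ and $\widetilde F_{\boldsymbol\nu}(\rho,\boldsymbol T)=(1-\rho T_1T_2T_3)\prod_i(1-T_i)F_{\boldsymbol\nu}(\rho,\boldsymbol T)$ (a polynomial in $\boldsymbol T$). Define $$\mathrm{fact}_v(e_0,\boldsymbol e,\boldsymbol f)=\frac{1}{1-q_v^{-2}}\,q_v^{-e_0-\sum_i(e_i+f_i)}\,\widetilde F_{(e_i+f_i)_i}\big(q_v,(q_v^{-1},q_v^{-1},q_v^{-1})\big).$$ For $\boldsymbol n=(e_0,\boldsymbol e,\boldsymbol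 f)\in\{0,1\}^7$ let $\kappa_v^{\boldsymbol n}$ be the set of $(x_0,x_1,x_2,x_3,y_1,y_2,y_3)\in\kappa_v^7$ whose coordinates vanish at the positions where $\boldsymbol n$ has entry $1$, and $$\mathrm{dens}_{S,v}(e_0,\boldsymbol e,\boldsymbol f)=q_v^{-6}\,\#\{(x_0,\boldsymbol x,\boldsymbol y)\in\kappa_v^{(e_0,\boldsymbol e,\boldsymbol f)}:\ x_1y_1+x_2y_2+x_3y_3=0\}.$$ *)

(* Defs.v *)
From HB Require Import structures.
From mathcomp Require Import all_boot all_order all_algebra all_field.
From mathcomp Require Import classical_sets boolp reals constructive_ereal ereal esum.

Set Implicit Arguments.
Unset Strict Implicit.
Unset Printing Implicit Defensive.

Import Order.TTheory GRing.Theory Num.Theory.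
Local Open Scope ring_scope.

(* {0,1}^7 : positions 0 = e_0, 1,2,3 = e_1,e_2,e_3, 4,5,6 = f_1,f_2,f_3. *)
Definition B7 := {ffun 'I_7 -> bool}.

Definition e0 (n : B7) : nat := n (inord 0).
Definition ee (n : B7) (i : 'I_3) : nat := n (inord i.+1).
Definition ff (n : B7) (i : 'I_3) : nat := n (inord i.+4).

Definition quantA (n : B7) (i : 'I_3) : nat :=
  (\sum_(j < 3 | j != i) ee n j + \sum_(j < 3) ff n j)%N.
Definition quantB (n : B7) (i : 'I_3) : nat :=
  (e0 n + \sum_(j < 3 | j != i) (ee n j + ff n j))%N.
Definition quantC (n : B7) : nat := (e0 n + \sum_(j < 3) ee n j)%N.

Definition minQuant (n : B7) : nat :=
  minn (\big[minn/quantC n]_(i < 3) quantA n i)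
       (\big[minn/quantC n]_(i < 3) quantB n i).

Definition inS (n : B7) : bool := minQuant n == 0%N.

Definition leB7 (m n : B7) : bool := [forall i, m i ==> n i].

Definition is_mu0S (mu : B7 -> int) : Prop :=
  forall n : B7, (inS n : int) = \sum_(m : B7 | leB7 m n) mu m.

Section Local.
Variable R : realType.

(* F_nu(rho, T) evaluated at rho = q, T = (1/q,1/q,1/q):
   sum over n in N^3 of q^(min_i (n_i+nu_i)) * q^(-(n_1+n_2+n_3)) *)
Definition F_at (q : R) (nu : nat * nat * nat) : R :=
  fine (\esum_(n in [set: nat * nat * nat])
         ((q ^+ minn (n.1.1 + nu.1.1)%N (minn (n.1.2 + nu.1.2)%N (n.2 + nu.2)%N))
          / q ^+ (n.1.1 + n.1.2 + n.2)%N)%:E).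

(* tilde F_nu(rho,T) = (1 - rho T1 T2 T3) prod_i (1 - T_i) F_nu(rho,T), at the same point *)
Definition Ftilde_at (q : R) (nu : nat * nat * nat) : R :=
  (1 - q * q^-1 * q^-1 * q^-1) * ((1 - q^-1) * (1 - q^-1) * (1 - q^-1)) * F_at q nu.

Definition fact_v (q : R) (n : B7) : R :=
  (1 - q^-2)^-1 * (q ^+ (e0 n + \sum_(i < 3) (ee n i + ff n i))%N)^-1 *
  Ftilde_at q ((ee n (inord 0) + ff n (inord 0))%N, (ee n (inord 1) + ff n (inord 1))%N,
   (ee n (inord 2) + ff n (inord 2))%N).

End Local.

(* dens_{S,v}, kappa_v = K a finite field *)
Definition dens_S (R : realType) (K : finFieldType) (n : B7) : R :=
  (#|K|%:R ^+ 6)^-1 *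
  #|[set x : {ffun 'I_7 -> K} |
      [forall i, n i ==> (x i == 0)] &&
      (x (inord 1) * x (inord 4) + x (inord 2) * x (inord 5)
        + x (inord 3) * x (inord 6) == 0)]|%:R.

(* Main.v *)
Require Import Defs.
From HB Require Import structures.
From mathcomp Require Import all_boot all_order all_algebra all_field.
From mathcomp Require Import classical_sets boolp reals constructive_ereal ereal esum.
From mathcomp Require Import all_classical all_reals all_analysis.
From mathcomp Require Import ring lra zify.
Import Order.TTheory GRing.Theory Num.Theory.

Module P1.
Set Implicit Arguments. Unset Strict Implicit.
Local Open Scope ring_scope.

Definition mkf (T : Type) (t0 t1 t2 t3 t4 t5 t6 : T) : {ffun 'I_7 -> T} :=
  [ffun i : 'I_7 => nth t0 [:: t0; t1; t2; t3; t4; t5; t6] i].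

Lemma mkfE (T : Type) (t0 t1 t2 t3 t4 t5 t6 : T) (k : nat) : (k < 7)%N ->
  mkf t0 t1 t2 t3 t4 t5 t6 (inord k) = nth t0 [:: t0; t1; t2; t3; t4; t5; t6] k.
Proof. by move=> hk; rewrite ffunE inordK. Qed.

Definition inSb (b0 b1 b2 b3 b4 b5 b6 : bool) : bool :=
  [|| (b2 + b3 + b4 + b5 + b6 == 0)%N, (b1 + b3 + b4 + b5 + b6 == 0)%N,
      (b1 + b2 + b4 + b5 + b6 == 0)%N, (b0 + (b2 + b5) + (b3 + b6) == 0)%N,
      (b0 + (b1 + b4) + (b3 + b6) == 0)%N, (b0 + (b1 + b4) + (b2 + b5) == 0)%N
    | (b0 + b1 + b2 + b3 == 0)%N].

Lemma inS_mkf b0 b1 b2 b3 b4 b5 b6 :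
  inS (mkf b0 b1 b2 b3 b4 b5 b6) = inSb b0 b1 b2 b3 b4 b5 b6.
Proof.
rewrite /inS /minQuant /quantA /quantB /quantC /e0 /ee /ff.
rewrite !(@big_ord_recl nat _ minn) !(@big_ord0 nat _ minn).
do 6 (rewrite big_mkcond /= !big_ord_recl !big_ord0 /=).
rewrite !mkfE //=.
by move: b0 b1 b2 b3 b4 b5 b6; case; case; case; case; case; case; case.
Qed.

Lemma mkf_bij (T : finType) :
  bijective (fun p : T * T * T * T * T * T * T =>
    mkf p.1.1.1.1.1.1 p.1.1.1.1.1.2 p.1.1.1.1.2 p.1.1.1.2 p.1.1.2 p.1.2 p.2).
Proof.
exists (fun f : {ffun 'I_7 -> T} =>
  (f (inord 0), f (inord 1), f (inord 2), f (inord 3), f (inord 4), f (inord 5), f (inord 6))).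
  case=> [[[[[[a b] c] d] e] g] h].
  by rewrite !mkfE.
move=> f; apply/ffunP => i; rewrite ffunE.
have -> : i = inord i by rewrite inord_val.
case: i => [[|[|[|[|[|[|[|k]]]]]]] hk]; rewrite ?inordK //.
Qed.
Lemma sum_ffun7 (V : nmodType) (T : finType) (F : {ffun 'I_7 -> T} -> V) :
  \sum_(f : {ffun 'I_7 -> T}) F f =
  \sum_(t0 : T) \sum_(t1 : T) \sum_(t2 : T) \sum_(t3 : T) \sum_(t4 : T)
   \sum_(t5 : T) \sum_(t6 : T) F (mkf t0 t1 t2 t3 t4 t5 t6).
Proof.
rewrite !pair_big.
rewrite (reindex _ (onW_bij _ (@mkf_bij T))).
apply: eq_big => // -[[[[[[a b] c] d] e] g] h].
Qed.
Arguments mkf : simpl never.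

Definition bsum (V : nmodType) (F : bool -> V) : V := F true + F false.
Definition S7 (V : nmodType) (F : bool -> bool -> bool -> bool -> bool -> bool -> bool -> V) : V :=
  bsum (fun c0 => bsum (fun c1 => bsum (fun c2 => bsum (fun c3 => bsum (fun c4 =>
  bsum (fun c5 => bsum (fun c6 => F c0 c1 c2 c3 c4 c5 c6))))))).

Lemma eq_S7 (V : nmodType) (F G : bool -> bool -> bool -> bool -> bool -> bool -> bool -> V) :
  (forall c0 c1 c2 c3 c4 c5 c6, F c0 c1 c2 c3 c4 c5 c6 = G c0 c1 c2 c3 c4 c5 c6) ->
  S7 F = S7 G.
Proof. by move=> H; rewrite /S7 /bsum !H. Qed.

Lemma sumB7 (V : nmodType) (G : B7 -> V) :
  \sum_(n : B7) G n = S7 (fun c0 c1 c2 c3 c4 c5 c6 => G (mkf c0 c1 c2 c3 c4 c5 c6)).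
Proof. by rewrite sum_ffun7 !big_bool. Qed.

Lemma leB7_mkf c0 c1 c2 c3 c4 c5 c6 b0 b1 b2 b3 b4 b5 b6 :
  leB7 (mkf c0 c1 c2 c3 c4 c5 c6) (mkf b0 b1 b2 b3 b4 b5 b6) =
  [&& c0 ==> b0, c1 ==> b1, c2 ==> b2, c3 ==> b3, c4 ==> b4, c5 ==> b5 & c6 ==> b6].
Proof.
apply/forallP/idP.
  move=> H; move: (H (inord 0)) (H (inord 1)) (H (inord 2)) (H (inord 3)) (H (inord 4)) (H (inord 5)) (H (inord 6)).
  by rewrite !mkfE //= => -> -> -> -> -> -> ->.
move=> /andP[h0 /andP[h1 /andP[h2 /andP[h3 /andP[h4 /andP[h5 h6]]]]]] i.
have -> : i = inord i by rewrite inord_val.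
by case: i => [[|[|[|[|[|[|[|k]]]]]]] hk]; rewrite ?mkfE.
Qed.

End P1.
Import P1.

Module P2.
Set Implicit Arguments. Unset Strict Implicit.
Local Open Scope ring_scope.
Arguments mkf : simpl never.

Definition le7 (c0 c1 c2 c3 c4 c5 c6 b0 b1 b2 b3 b4 b5 b6 : bool) :=
  [&& c0 ==> b0, c1 ==> b1, c2 ==> b2, c3 ==> b3, c4 ==> b4, c5 ==> b5 & c6 ==> b6].
Definition sgn (c0 c1 c2 c3 c4 c5 c6 b0 b1 b2 b3 b4 b5 b6 : bool) : int :=
  if odd (b0 + b1 + b2 + b3 + b4 + b5 + b6 + c0 + c1 + c2 + c3 + c4 + c5 + c6)%N then -1 else 1.

Definition Mtab (b0 b1 b2 b3 b4 b5 b6 : bool) : int :=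
  match b0, b1, b2, b3, b4, b5, b6 with
  | false, false, false, false, false, false, false => 1
  | false, false, false, true, false, true, false => (- 1)
  | false, false, false, true, true, false, false => (- 1)
  | false, false, false, true, true, true, false => 1
  | false, false, true, false, false, false, true => (- 1)
  | false, false, true, false, true, false, false => (- 1)
  | false, false, true, false, true, false, true => 1
  | false, false, true, true, false, false, false => (- 1)
  | false, false, true, true, false, false, true => 1
  | false, false, true, true, false, true, false => 1
  | false, false, true, true, true, false, false => 2
  | false, false, true, true, true, false, true => (- 1)
  | false, false, true, true, true, true, false => (- 1)
  | false, true, false, false, false, false, true => (- 1)
  | false, true, false, false, false, true, false => (- 1)
  | false, true, false, false, false, true, true => 1
  | false, true, false, true, false, false, false => (- 1)
  | false, true, false, true, false, false, true => 1
  | false, true, false, true, false, true, false => 2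
  | false, true, false, true, false, true, true => (- 1)
  | false, true, false, true, true, false, false => 1
  | false, true, false, true, true, true, false => (- 1)
  | false, true, true, false, false, false, false => (- 1)
  | false, true, true, false, false, false, true => 2
  | false, true, true, false, false, true, false => 1
  | false, true, true, false, false, true, true => (- 1)
  | false, true, true, false, true, false, false => 1
  | false, true, true, false, true, false, true => (- 1)
  | false, true, true, true, false, false, false => 2
  | false, true, true, true, false, false, true => (- 2)
  | false, true, true, true, false, true, false => (- 2)
  | false, true, true, true, false, true, true => 1
  | false, true, true, true, true, false, false => (- 2)
  | false, true, true, true, true, false, true => 1
  | false, true, true, true, true, true, false => 1
  | true, false, false, false, false, false, true => (- 1)
  | true, false, false, false, false, true, false => (- 1)
  | true, false, false, false, false, true, true => 1
  | true, false, false, false, true, false, false => (- 1)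
  | true, false, false, false, true, false, true => 1
  | true, false, false, false, true, true, false => 1
  | true, false, false, false, true, true, true => (- 1)
  | true, false, false, true, false, true, false => 1
  | true, false, false, true, true, false, false => 1
  | true, false, false, true, true, true, false => (- 1)
  | true, false, true, false, false, false, true => 1
  | true, false, true, false, true, false, false => 1
  | true, false, true, false, true, false, true => (- 1)
  | true, false, true, true, false, true, true => (- 1)
  | true, false, true, true, true, false, false => (- 1)
  | true, false, true, true, true, true, true => 1
  | true, true, false, false, false, false, true => 1
  | true, true, false, false, false, true, false => 1
  | true, true, false, false, false, true, true => (- 1)
  | true, true, false, true, false, true, false => (- 1)
  | true, true, false, true, true, false, true => (- 1)
  | true, true, false, true, true, true, true => 1
  | true, true, true, false, false, false, true => (- 1)
  | true, true, true, false, true, true, false => (- 1)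
  | true, true, true, false, true, true, true => 1
  | true, true, true, true, false, true, true => 1
  | true, true, true, true, true, false, true => 1
  | true, true, true, true, true, true, false => 1
  | true, true, true, true, true, true, true => (- 2)
  | _, _, _, _, _, _, _ => 0
  end%R.

Lemma muE (mu : B7 -> int) : is_mu0S mu ->
  forall b0 b1 b2 b3 b4 b5 b6, mu (mkf b0 b1 b2 b3 b4 b5 b6) = Mtab b0 b1 b2 b3 b4 b5 b6.
Proof.
move=> H.
have HB : forall b0 b1 b2 b3 b4 b5 b6, (inSb b0 b1 b2 b3 b4 b5 b6 : int) =
  S7 (fun c0 c1 c2 c3 c4 c5 c6 => if le7 c0 c1 c2 c3 c4 c5 c6 b0 b1 b2 b3 b4 b5 b6 then mu (mkf c0 c1 c2 c3 c4 c5 c6) else 0).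
  move=> b0 b1 b2 b3 b4 b5 b6; rewrite -inS_mkf H big_mkcond sumB7; apply: eq_S7 => c0 c1 c2 c3 c4 c5 c6.
  by rewrite leB7_mkf.
have m_0000000 : mu (mkf false false false false false false false) = Mtab false false false false false false false.
  have := HB false false false false false false false; rewrite /S7 /bsum /le7 /inSb /=; rewrite /Mtab /=; lia.
have m_0000001 : mu (mkf false false false false false false true) = Mtab false false false false false false true.
  have := HB false false false false false false true; rewrite /S7 /bsum /le7 /inSb /=; rewrite m_0000000; rewrite /Mtab /=; lia.
have m_0000010 : mu (mkf false false false false false true false) = Mtab false false false false false true false.
  have := HB false false false false false true false; rewrite /S7 /bsum /le7 /inSb /=; rewrite m_0000000; rewrite /Mtab /=; lia.
have m_0000100 : mu (mkf false false false false true false false) = Mtab false false false false true false false.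
  have := HB false false false false true false false; rewrite /S7 /bsum /le7 /inSb /=; rewrite m_0000000; rewrite /Mtab /=; lia.
have m_0001000 : mu (mkf false false false true false false false) = Mtab false false false true false false false.
  have := HB false false false true false false false; rewrite /S7 /bsum /le7 /inSb /=; rewrite m_0000000; rewrite /Mtab /=; lia.
have m_0010000 : mu (mkf false false true false false false false) = Mtab false false true false false false false.
  have := HB false false true false false false false; rewrite /S7 /bsum /le7 /inSb /=; rewrite m_0000000; rewrite /Mtab /=; lia.
have m_0100000 : mu (mkf false true false false false false false) = Mtab false true false false false false false.
  have := HB false true false false false false false; rewrite /S7 /bsum /le7 /inSb /=; rewrite m_0000000; rewrite /Mtab /=; lia.
have m_1000000 : mu (mkf true false false false false false false) = Mtab true false false false false false false.
  have := HB true false false false false false false; rewrite /S7 /bsum /le7 /inSb /=; rewrite m_0000000; rewrite /Mtab /=; lia.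
have m_0000011 : mu (mkf false false false false false true true) = Mtab false false false false false true true.
  have := HB false false false false false true true; rewrite /S7 /bsum /le7 /inSb /=; rewrite m_0000000 m_0000001 m_0000010; rewrite /Mtab /=; lia.
have m_0000101 : mu (mkf false false false false true false true) = Mtab false false false false true false true.
  have := HB false false false false true false true; rewrite /S7 /bsum /le7 /inSb /=; rewrite m_0000000 m_0000001 m_0000100; rewrite /Mtab /=; lia.
have m_0000110 : mu (mkf false false false false true true false) = Mtab false false false false true true false.
  have := HB false false false false true true false; rewrite /S7 /bsum /le7 /inSb /=; rewrite m_0000000 m_0000010 m_0000100; rewrite /Mtab /=; lia.
have m_0001001 : mu (mkf false false false true false false true) = Mtab false false false true false false true.
  have := HB false false false true false false true; rewrite /S7 /bsum /le7 /inSb /=; rewrite m_0000000 m_0000001 m_0001000; rewrite /Mtab /=; lia.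
have m_0001010 : mu (mkf false false false true false true false) = Mtab false false false true false true false.
  have := HB false false false true false true false; rewrite /S7 /bsum /le7 /inSb /=; rewrite m_0000000 m_0000010 m_0001000; rewrite /Mtab /=; lia.
have m_0001100 : mu (mkf false false false true true false false) = Mtab false false false true true false false.
  have := HB false false false true true false false; rewrite /S7 /bsum /le7 /inSb /=; rewrite m_0000000 m_0000100 m_0001000; rewrite /Mtab /=; lia.
have m_0010001 : mu (mkf false false true false false false true) = Mtab false false true false false false true.
  have := HB false false true false false false true; rewrite /S7 /bsum /le7 /inSb /=; rewrite m_0000000 m_0000001 m_0010000; rewrite /Mtab /=; lia.
have m_0010010 : mu (mkf false false true false false true false) = Mtab false false true false false true false.
  have := HB false false true false false true false; rewrite /S7 /bsum /le7 /inSb /=; rewrite m_0000000 m_0000010 m_0010000; rewrite /Mtab /=; lia.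
have m_0010100 : mu (mkf false false true false true false false) = Mtab false false true false true false false.
  have := HB false false true false true false false; rewrite /S7 /bsum /le7 /inSb /=; rewrite m_0000000 m_0000100 m_0010000; rewrite /Mtab /=; lia.
have m_0011000 : mu (mkf false false true true false false false) = Mtab false false true true false false false.
  have := HB false false true true false false false; rewrite /S7 /bsum /le7 /inSb /=; rewrite m_0000000 m_0001000 m_0010000; rewrite /Mtab /=; lia.
have m_0100001 : mu (mkf false true false false false false true) = Mtab false true false false false false true.
  have := HB false true false false false false true; rewrite /S7 /bsum /le7 /inSb /=; rewrite m_0000000 m_0000001 m_0100000; rewrite /Mtab /=; lia.
have m_0100010 : mu (mkf false true false false false true false) = Mtab false true false false false true false.
  have := HB false true false false false true false; rewrite /S7 /bsum /le7 /inSb /=; rewrite m_0000000 m_0000010 m_0100000; rewrite /Mtab /=; lia.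
have m_0100100 : mu (mkf false true false false true false false) = Mtab false true false false true false false.
  have := HB false true false false true false false; rewrite /S7 /bsum /le7 /inSb /=; rewrite m_0000000 m_0000100 m_0100000; rewrite /Mtab /=; lia.
have m_0101000 : mu (mkf false true false true false false false) = Mtab false true false true false false false.
  have := HB false true false true false false false; rewrite /S7 /bsum /le7 /inSb /=; rewrite m_0000000 m_0001000 m_0100000; rewrite /Mtab /=; lia.
have m_0110000 : mu (mkf false true true false false false false) = Mtab false true true false false false false.
  have := HB false true true false false false false; rewrite /S7 /bsum /le7 /inSb /=; rewrite m_0000000 m_0010000 m_0100000; rewrite /Mtab /=; lia.
have m_1000001 : mu (mkf true false false false false false true) = Mtab true false false false false false true.
  have := HB true false false false false false true; rewrite /S7 /bsum /le7 /inSb /=; rewrite m_0000000 m_0000001 m_1000000; rewrite /Mtab /=; lia.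
have m_1000010 : mu (mkf true false false false false true false) = Mtab true false false false false true false.
  have := HB true false false false false true false; rewrite /S7 /bsum /le7 /inSb /=; rewrite m_0000000 m_0000010 m_1000000; rewrite /Mtab /=; lia.
have m_1000100 : mu (mkf true false false false true false false) = Mtab true false false false true false false.
  have := HB true false false false true false false; rewrite /S7 /bsum /le7 /inSb /=; rewrite m_0000000 m_0000100 m_1000000; rewrite /Mtab /=; lia.
have m_1001000 : mu (mkf true false false true false false false) = Mtab true false false true false false false.
  have := HB true false false true false false false; rewrite /S7 /bsum /le7 /inSb /=; rewrite m_0000000 m_0001000 m_1000000; rewrite /Mtab /=; lia.
have m_1010000 : mu (mkf true false true false false false false) = Mtab true false true false false false false.
  have := HB true false true false false false false; rewrite /S7 /bsum /le7 /inSb /=; rewrite m_0000000 m_0010000 m_1000000; rewrite /Mtab /=; lia.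
have m_1100000 : mu (mkf true true false false false false false) = Mtab true true false false false false false.
  have := HB true true false false false false false; rewrite /S7 /bsum /le7 /inSb /=; rewrite m_0000000 m_0100000 m_1000000; rewrite /Mtab /=; lia.
have m_0000111 : mu (mkf false false false false true true true) = Mtab false false false false true true true.
  have := HB false false false false true true true; rewrite /S7 /bsum /le7 /inSb /=; rewrite m_0000000 m_0000001 m_0000010 m_0000011 m_0000100 m_0000101 m_0000110; rewrite /Mtab /=; lia.
have m_0001011 : mu (mkf false false false true false true true) = Mtab false false false true false true true.
  have := HB false false false true false true true; rewrite /S7 /bsum /le7 /inSb /=; rewrite m_0000000 m_0000001 m_0000010 m_0000011 m_0001000 m_0001001 m_0001010; rewrite /Mtab /=; lia.
have m_0001101 : mu (mkf false false false true true false true) = Mtab false false false true true false true.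
  have := HB false false false true true false true; rewrite /S7 /bsum /le7 /inSb /=; rewrite m_0000000 m_0000001 m_0000100 m_0000101 m_0001000 m_0001001 m_0001100; rewrite /Mtab /=; lia.
have m_0001110 : mu (mkf false false false true true true false) = Mtab false false false true true true false.
  have := HB false false false true true true false; rewrite /S7 /bsum /le7 /inSb /=; rewrite m_0000000 m_0000010 m_0000100 m_0000110 m_0001000 m_0001010 m_0001100; rewrite /Mtab /=; lia.
have m_0010011 : mu (mkf false false true false false true true) = Mtab false false true false false true true.
  have := HB false false true false false true true; rewrite /S7 /bsum /le7 /inSb /=; rewrite m_0000000 m_0000001 m_0000010 m_0000011 m_0010000 m_0010001 m_0010010; rewrite /Mtab /=; lia.
have m_0010101 : mu (mkf false false true false true false true) = Mtab false false true false true false true.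
  have := HB false false true false true false true; rewrite /S7 /bsum /le7 /inSb /=; rewrite m_0000000 m_0000001 m_0000100 m_0000101 m_0010000 m_0010001 m_0010100; rewrite /Mtab /=; lia.
have m_0010110 : mu (mkf false false true false true true false) = Mtab false false true false true true false.
  have := HB false false true false true true false; rewrite /S7 /bsum /le7 /inSb /=; rewrite m_0000000 m_0000010 m_0000100 m_0000110 m_0010000 m_0010010 m_0010100; rewrite /Mtab /=; lia.
have m_0011001 : mu (mkf false false true true false false true) = Mtab false false true true false false true.
  have := HB false false true true false false true; rewrite /S7 /bsum /le7 /inSb /=; rewrite m_0000000 m_0000001 m_0001000 m_0001001 m_0010000 m_0010001 m_0011000; rewrite /Mtab /=; lia.
have m_0011010 : mu (mkf false false true true false true false) = Mtab false false true true false true false.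
  have := HB false false true true false true false; rewrite /S7 /bsum /le7 /inSb /=; rewrite m_0000000 m_0000010 m_0001000 m_0001010 m_0010000 m_0010010 m_0011000; rewrite /Mtab /=; lia.
have m_0011100 : mu (mkf false false true true true false false) = Mtab false false true true true false false.
  have := HB false false true true true false false; rewrite /S7 /bsum /le7 /inSb /=; rewrite m_0000000 m_0000100 m_0001000 m_0001100 m_0010000 m_0010100 m_0011000; rewrite /Mtab /=; lia.
have m_0100011 : mu (mkf false true false false false true true) = Mtab false true false false false true true.
  have := HB false true false false false true true; rewrite /S7 /bsum /le7 /inSb /=; rewrite m_0000000 m_0000001 m_0000010 m_0000011 m_0100000 m_0100001 m_0100010; rewrite /Mtab /=; lia.
have m_0100101 : mu (mkf false true false false true false true) = Mtab false true false false true false true.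
  have := HB false true false false true false true; rewrite /S7 /bsum /le7 /inSb /=; rewrite m_0000000 m_0000001 m_0000100 m_0000101 m_0100000 m_0100001 m_0100100; rewrite /Mtab /=; lia.
have m_0100110 : mu (mkf false true false false true true false) = Mtab false true false false true true false.
  have := HB false true false false true true false; rewrite /S7 /bsum /le7 /inSb /=; rewrite m_0000000 m_0000010 m_0000100 m_0000110 m_0100000 m_0100010 m_0100100; rewrite /Mtab /=; lia.
have m_0101001 : mu (mkf false true false true false false true) = Mtab false true false true false false true.
  have := HB false true false true false false true; rewrite /S7 /bsum /le7 /inSb /=; rewrite m_0000000 m_0000001 m_0001000 m_0001001 m_0100000 m_0100001 m_0101000; rewrite /Mtab /=; lia.
have m_0101010 : mu (mkf false true false true false true false) = Mtab false true false true false true false.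
  have := HB false true false true false true false; rewrite /S7 /bsum /le7 /inSb /=; rewrite m_0000000 m_0000010 m_0001000 m_0001010 m_0100000 m_0100010 m_0101000; rewrite /Mtab /=; lia.
have m_0101100 : mu (mkf false true false true true false false) = Mtab false true false true true false false.
  have := HB false true false true true false false; rewrite /S7 /bsum /le7 /inSb /=; rewrite m_0000000 m_0000100 m_0001000 m_0001100 m_0100000 m_0100100 m_0101000; rewrite /Mtab /=; lia.
have m_0110001 : mu (mkf false true true false false false true) = Mtab false true true false false false true.
  have := HB false true true false false false true; rewrite /S7 /bsum /le7 /inSb /=; rewrite m_0000000 m_0000001 m_0010000 m_0010001 m_0100000 m_0100001 m_0110000; rewrite /Mtab /=; lia.
have m_0110010 : mu (mkf false true true false false true false) = Mtab false true true false false true false.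
  have := HB false true true false false true false; rewrite /S7 /bsum /le7 /inSb /=; rewrite m_0000000 m_0000010 m_0010000 m_0010010 m_0100000 m_0100010 m_0110000; rewrite /Mtab /=; lia.
have m_0110100 : mu (mkf false true true false true false false) = Mtab false true true false true false false.
  have := HB false true true false true false false; rewrite /S7 /bsum /le7 /inSb /=; rewrite m_0000000 m_0000100 m_0010000 m_0010100 m_0100000 m_0100100 m_0110000; rewrite /Mtab /=; lia.
have m_0111000 : mu (mkf false true true true false false false) = Mtab false true true true false false false.
  have := HB false true true true false false false; rewrite /S7 /bsum /le7 /inSb /=; rewrite m_0000000 m_0001000 m_0010000 m_0011000 m_0100000 m_0101000 m_0110000; rewrite /Mtab /=; lia.
have m_1000011 : mu (mkf true false false false false true true) = Mtab true false false false false true true.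
  have := HB true false false false false true true; rewrite /S7 /bsum /le7 /inSb /=; rewrite m_0000000 m_0000001 m_0000010 m_0000011 m_1000000 m_1000001 m_1000010; rewrite /Mtab /=; lia.
have m_1000101 : mu (mkf true false false false true false true) = Mtab true false false false true false true.
  have := HB true false false false true false true; rewrite /S7 /bsum /le7 /inSb /=; rewrite m_0000000 m_0000001 m_0000100 m_0000101 m_1000000 m_1000001 m_1000100; rewrite /Mtab /=; lia.
have m_1000110 : mu (mkf true false false false true true false) = Mtab true false false false true true false.
  have := HB true false false false true true false; rewrite /S7 /bsum /le7 /inSb /=; rewrite m_0000000 m_0000010 m_0000100 m_0000110 m_1000000 m_1000010 m_1000100; rewrite /Mtab /=; lia.
have m_1001001 : mu (mkf true false false true false false true) = Mtab true false false true false false true.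
  have := HB true false false true false false true; rewrite /S7 /bsum /le7 /inSb /=; rewrite m_0000000 m_0000001 m_0001000 m_0001001 m_1000000 m_1000001 m_1001000; rewrite /Mtab /=; lia.
have m_1001010 : mu (mkf true false false true false true false) = Mtab true false false true false true false.
  have := HB true false false true false true false; rewrite /S7 /bsum /le7 /inSb /=; rewrite m_0000000 m_0000010 m_0001000 m_0001010 m_1000000 m_1000010 m_1001000; rewrite /Mtab /=; lia.
have m_1001100 : mu (mkf true false false true true false false) = Mtab true false false true true false false.
  have := HB true false false true true false false; rewrite /S7 /bsum /le7 /inSb /=; rewrite m_0000000 m_0000100 m_0001000 m_0001100 m_1000000 m_1000100 m_1001000; rewrite /Mtab /=; lia.
have m_1010001 : mu (mkf true false true false false false true) = Mtab true false true false false false true.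
  have := HB true false true false false false true; rewrite /S7 /bsum /le7 /inSb /=; rewrite m_0000000 m_0000001 m_0010000 m_0010001 m_1000000 m_1000001 m_1010000; rewrite /Mtab /=; lia.
have m_1010010 : mu (mkf true false true false false true false) = Mtab true false true false false true false.
  have := HB true false true false false true false; rewrite /S7 /bsum /le7 /inSb /=; rewrite m_0000000 m_0000010 m_0010000 m_0010010 m_1000000 m_1000010 m_1010000; rewrite /Mtab /=; lia.
have m_1010100 : mu (mkf true false true false true false false) = Mtab true false true false true false false.
  have := HB true false true false true false false; rewrite /S7 /bsum /le7 /inSb /=; rewrite m_0000000 m_0000100 m_0010000 m_0010100 m_1000000 m_1000100 m_1010000; rewrite /Mtab /=; lia.
have m_1011000 : mu (mkf true false true true false false false) = Mtab true false true true false false false.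
  have := HB true false true true false false false; rewrite /S7 /bsum /le7 /inSb /=; rewrite m_0000000 m_0001000 m_0010000 m_0011000 m_1000000 m_1001000 m_1010000; rewrite /Mtab /=; lia.
have m_1100001 : mu (mkf true true false false false false true) = Mtab true true false false false false true.
  have := HB true true false false false false true; rewrite /S7 /bsum /le7 /inSb /=; rewrite m_0000000 m_0000001 m_0100000 m_0100001 m_1000000 m_1000001 m_1100000; rewrite /Mtab /=; lia.
have m_1100010 : mu (mkf true true false false false true false) = Mtab true true false false false true false.
  have := HB true true false false false true false; rewrite /S7 /bsum /le7 /inSb /=; rewrite m_0000000 m_0000010 m_0100000 m_0100010 m_1000000 m_1000010 m_1100000; rewrite /Mtab /=; lia.
have m_1100100 : mu (mkf true true false false true false false) = Mtab true true false false true false false.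
  have := HB true true false false true false false; rewrite /S7 /bsum /le7 /inSb /=; rewrite m_0000000 m_0000100 m_0100000 m_0100100 m_1000000 m_1000100 m_1100000; rewrite /Mtab /=; lia.
have m_1101000 : mu (mkf true true false true false false false) = Mtab true true false true false false false.
  have := HB true true false true false false false; rewrite /S7 /bsum /le7 /inSb /=; rewrite m_0000000 m_0001000 m_0100000 m_0101000 m_1000000 m_1001000 m_1100000; rewrite /Mtab /=; lia.
have m_1110000 : mu (mkf true true true false false false false) = Mtab true true true false false false false.
  have := HB true true true false false false false; rewrite /S7 /bsum /le7 /inSb /=; rewrite m_0000000 m_0010000 m_0100000 m_0110000 m_1000000 m_1010000 m_1100000; rewrite /Mtab /=; lia.
have m_0001111 : mu (mkf false false false true true true true) = Mtab false false false true true true true.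
  have := HB false false false true true true true; rewrite /S7 /bsum /le7 /inSb /=; rewrite m_0000000 m_0000001 m_0000010 m_0000011 m_0000100 m_0000101 m_0000110 m_0000111 m_0001000 m_0001001 m_0001010 m_0001011 m_0001100 m_0001101 m_0001110; rewrite /Mtab /=; lia.
have m_0010111 : mu (mkf false false true false true true true) = Mtab false false true false true true true.
  have := HB false false true false true true true; rewrite /S7 /bsum /le7 /inSb /=; rewrite m_0000000 m_0000001 m_0000010 m_0000011 m_0000100 m_0000101 m_0000110 m_0000111 m_0010000 m_0010001 m_0010010 m_0010011 m_0010100 m_0010101 m_0010110; rewrite /Mtab /=; lia.
have m_0011011 : mu (mkf false false true true false true true) = Mtab false false true true false true true.
  have := HB false false true true false true true; rewrite /S7 /bsum /le7 /inSb /=; rewrite m_0000000 m_0000001 m_0000010 m_0000011 m_0001000 m_0001001 m_0001010 m_0001011 m_0010000 m_0010001 m_0010010 m_0010011 m_0011000 m_0011001 m_0011010; rewrite /Mtab /=; lia.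
have m_0011101 : mu (mkf false false true true true false true) = Mtab false false true true true false true.
  have := HB false false true true true false true; rewrite /S7 /bsum /le7 /inSb /=; rewrite m_0000000 m_0000001 m_0000100 m_0000101 m_0001000 m_0001001 m_0001100 m_0001101 m_0010000 m_0010001 m_0010100 m_0010101 m_0011000 m_0011001 m_0011100; rewrite /Mtab /=; lia.
have m_0011110 : mu (mkf false false true true true true false) = Mtab false false true true true true false.
  have := HB false false true true true true false; rewrite /S7 /bsum /le7 /inSb /=; rewrite m_0000000 m_0000010 m_0000100 m_0000110 m_0001000 m_0001010 m_0001100 m_0001110 m_0010000 m_0010010 m_0010100 m_0010110 m_0011000 m_0011010 m_0011100; rewrite /Mtab /=; lia.
have m_0100111 : mu (mkf false true false false true true true) = Mtab false true false false true true true.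
  have := HB false true false false true true true; rewrite /S7 /bsum /le7 /inSb /=; rewrite m_0000000 m_0000001 m_0000010 m_0000011 m_0000100 m_0000101 m_0000110 m_0000111 m_0100000 m_0100001 m_0100010 m_0100011 m_0100100 m_0100101 m_0100110; rewrite /Mtab /=; lia.
have m_0101011 : mu (mkf false true false true false true true) = Mtab false true false true false true true.
  have := HB false true false true false true true; rewrite /S7 /bsum /le7 /inSb /=; rewrite m_0000000 m_0000001 m_0000010 m_0000011 m_0001000 m_0001001 m_0001010 m_0001011 m_0100000 m_0100001 m_0100010 m_0100011 m_0101000 m_0101001 m_0101010; rewrite /Mtab /=; lia.
have m_0101101 : mu (mkf false true false true true false true) = Mtab false true false true true false true.
  have := HB false true false true true false true; rewrite /S7 /bsum /le7 /inSb /=; rewrite m_0000000 m_0000001 m_0000100 m_0000101 m_0001000 m_0001001 m_0001100 m_0001101 m_0100000 m_0100001 m_0100100 m_0100101 m_0101000 m_0101001 m_0101100; rewrite /Mtab /=; lia.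
have m_0101110 : mu (mkf false true false true true true false) = Mtab false true false true true true false.
  have := HB false true false true true true false; rewrite /S7 /bsum /le7 /inSb /=; rewrite m_0000000 m_0000010 m_0000100 m_0000110 m_0001000 m_0001010 m_0001100 m_0001110 m_0100000 m_0100010 m_0100100 m_0100110 m_0101000 m_0101010 m_0101100; rewrite /Mtab /=; lia.
have m_0110011 : mu (mkf false true true false false true true) = Mtab false true true false false true true.
  have := HB false true true false false true true; rewrite /S7 /bsum /le7 /inSb /=; rewrite m_0000000 m_0000001 m_0000010 m_0000011 m_0010000 m_0010001 m_0010010 m_0010011 m_0100000 m_0100001 m_0100010 m_0100011 m_0110000 m_0110001 m_0110010; rewrite /Mtab /=; lia.
have m_0110101 : mu (mkf false true true false true false true) = Mtab false true true false true false true.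
  have := HB false true true false true false true; rewrite /S7 /bsum /le7 /inSb /=; rewrite m_0000000 m_0000001 m_0000100 m_0000101 m_0010000 m_0010001 m_0010100 m_0010101 m_0100000 m_0100001 m_0100100 m_0100101 m_0110000 m_0110001 m_0110100; rewrite /Mtab /=; lia.
have m_0110110 : mu (mkf false true true false true true false) = Mtab false true true false true true false.
  have := HB false true true false true true false; rewrite /S7 /bsum /le7 /inSb /=; rewrite m_0000000 m_0000010 m_0000100 m_0000110 m_0010000 m_0010010 m_0010100 m_0010110 m_0100000 m_0100010 m_0100100 m_0100110 m_0110000 m_0110010 m_0110100; rewrite /Mtab /=; lia.
have m_0111001 : mu (mkf false true true true false false true) = Mtab false true true true false false true.
  have := HB false true true true false false true; rewrite /S7 /bsum /le7 /inSb /=; rewrite m_0000000 m_0000001 m_0001000 m_0001001 m_0010000 m_0010001 m_0011000 m_0011001 m_0100000 m_0100001 m_0101000 m_0101001 m_0110000 m_0110001 m_0111000; rewrite /Mtab /=; lia.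
have m_0111010 : mu (mkf false true true true false true false) = Mtab false true true true false true false.
  have := HB false true true true false true false; rewrite /S7 /bsum /le7 /inSb /=; rewrite m_0000000 m_0000010 m_0001000 m_0001010 m_0010000 m_0010010 m_0011000 m_0011010 m_0100000 m_0100010 m_0101000 m_0101010 m_0110000 m_0110010 m_0111000; rewrite /Mtab /=; lia.
have m_0111100 : mu (mkf false true true true true false false) = Mtab false true true true true false false.
  have := HB false true true true true false false; rewrite /S7 /bsum /le7 /inSb /=; rewrite m_0000000 m_0000100 m_0001000 m_0001100 m_0010000 m_0010100 m_0011000 m_0011100 m_0100000 m_0100100 m_0101000 m_0101100 m_0110000 m_0110100 m_0111000; rewrite /Mtab /=; lia.
have m_1000111 : mu (mkf true false false false true true true) = Mtab true false false false true true true.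
  have := HB true false false false true true true; rewrite /S7 /bsum /le7 /inSb /=; rewrite m_0000000 m_0000001 m_0000010 m_0000011 m_0000100 m_0000101 m_0000110 m_0000111 m_1000000 m_1000001 m_1000010 m_1000011 m_1000100 m_1000101 m_1000110; rewrite /Mtab /=; lia.
have m_1001011 : mu (mkf true false false true false true true) = Mtab true false false true false true true.
  have := HB true false false true false true true; rewrite /S7 /bsum /le7 /inSb /=; rewrite m_0000000 m_0000001 m_0000010 m_0000011 m_0001000 m_0001001 m_0001010 m_0001011 m_1000000 m_1000001 m_1000010 m_1000011 m_1001000 m_1001001 m_1001010; rewrite /Mtab /=; lia.
have m_1001101 : mu (mkf true false false true true false true) = Mtab true false false true true false true.
  have := HB true false false true true false true; rewrite /S7 /bsum /le7 /inSb /=; rewrite m_0000000 m_0000001 m_0000100 m_0000101 m_0001000 m_0001001 m_0001100 m_0001101 m_1000000 m_1000001 m_1000100 m_1000101 m_1001000 m_1001001 m_1001100; rewrite /Mtab /=; lia.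
have m_1001110 : mu (mkf true false false true true true false) = Mtab true false false true true true false.
  have := HB true false false true true true false; rewrite /S7 /bsum /le7 /inSb /=; rewrite m_0000000 m_0000010 m_0000100 m_0000110 m_0001000 m_0001010 m_0001100 m_0001110 m_1000000 m_1000010 m_1000100 m_1000110 m_1001000 m_1001010 m_1001100; rewrite /Mtab /=; lia.
have m_1010011 : mu (mkf true false true false false true true) = Mtab true false true false false true true.
  have := HB true false true false false true true; rewrite /S7 /bsum /le7 /inSb /=; rewrite m_0000000 m_0000001 m_0000010 m_0000011 m_0010000 m_0010001 m_0010010 m_0010011 m_1000000 m_1000001 m_1000010 m_1000011 m_1010000 m_1010001 m_1010010; rewrite /Mtab /=; lia.
have m_1010101 : mu (mkf true false true false true false true) = Mtab true false true false true false true.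
  have := HB true false true false true false true; rewrite /S7 /bsum /le7 /inSb /=; rewrite m_0000000 m_0000001 m_0000100 m_0000101 m_0010000 m_0010001 m_0010100 m_0010101 m_1000000 m_1000001 m_1000100 m_1000101 m_1010000 m_1010001 m_1010100; rewrite /Mtab /=; lia.
have m_1010110 : mu (mkf true false true false true true false) = Mtab true false true false true true false.
  have := HB true false true false true true false; rewrite /S7 /bsum /le7 /inSb /=; rewrite m_0000000 m_0000010 m_0000100 m_0000110 m_0010000 m_0010010 m_0010100 m_0010110 m_1000000 m_1000010 m_1000100 m_1000110 m_1010000 m_1010010 m_1010100; rewrite /Mtab /=; lia.
have m_1011001 : mu (mkf true false true true false false true) = Mtab true false true true false false true.
  have := HB true false true true false false true; rewrite /S7 /bsum /le7 /inSb /=; rewrite m_0000000 m_0000001 m_0001000 m_0001001 m_0010000 m_0010001 m_0011000 m_0011001 m_1000000 m_1000001 m_1001000 m_1001001 m_1010000 m_1010001 m_1011000; rewrite /Mtab /=; lia.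
have m_1011010 : mu (mkf true false true true false true false) = Mtab true false true true false true false.
  have := HB true false true true false true false; rewrite /S7 /bsum /le7 /inSb /=; rewrite m_0000000 m_0000010 m_0001000 m_0001010 m_0010000 m_0010010 m_0011000 m_0011010 m_1000000 m_1000010 m_1001000 m_1001010 m_1010000 m_1010010 m_1011000; rewrite /Mtab /=; lia.
have m_1011100 : mu (mkf true false true true true false false) = Mtab true false true true true false false.
  have := HB true false true true true false false; rewrite /S7 /bsum /le7 /inSb /=; rewrite m_0000000 m_0000100 m_0001000 m_0001100 m_0010000 m_0010100 m_0011000 m_0011100 m_1000000 m_1000100 m_1001000 m_1001100 m_1010000 m_1010100 m_1011000; rewrite /Mtab /=; lia.
have m_1100011 : mu (mkf true true false false false true true) = Mtab true true false false false true true.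
  have := HB true true false false false true true; rewrite /S7 /bsum /le7 /inSb /=; rewrite m_0000000 m_0000001 m_0000010 m_0000011 m_0100000 m_0100001 m_0100010 m_0100011 m_1000000 m_1000001 m_1000010 m_1000011 m_1100000 m_1100001 m_1100010; rewrite /Mtab /=; lia.
have m_1100101 : mu (mkf true true false false true false true) = Mtab true true false false true false true.
  have := HB true true false false true false true; rewrite /S7 /bsum /le7 /inSb /=; rewrite m_0000000 m_0000001 m_0000100 m_0000101 m_0100000 m_0100001 m_0100100 m_0100101 m_1000000 m_1000001 m_1000100 m_1000101 m_1100000 m_1100001 m_1100100; rewrite /Mtab /=; lia.
have m_1100110 : mu (mkf true true false false true true false) = Mtab true true false false true true false.
  have := HB true true false false true true false; rewrite /S7 /bsum /le7 /inSb /=; rewrite m_0000000 m_0000010 m_0000100 m_0000110 m_0100000 m_0100010 m_0100100 m_0100110 m_1000000 m_1000010 m_1000100 m_1000110 m_1100000 m_1100010 m_1100100; rewrite /Mtab /=; lia.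
have m_1101001 : mu (mkf true true false true false false true) = Mtab true true false true false false true.
  have := HB true true false true false false true; rewrite /S7 /bsum /le7 /inSb /=; rewrite m_0000000 m_0000001 m_0001000 m_0001001 m_0100000 m_0100001 m_0101000 m_0101001 m_1000000 m_1000001 m_1001000 m_1001001 m_1100000 m_1100001 m_1101000; rewrite /Mtab /=; lia.
have m_1101010 : mu (mkf true true false true false true false) = Mtab true true false true false true false.
  have := HB true true false true false true false; rewrite /S7 /bsum /le7 /inSb /=; rewrite m_0000000 m_0000010 m_0001000 m_0001010 m_0100000 m_0100010 m_0101000 m_0101010 m_1000000 m_1000010 m_1001000 m_1001010 m_1100000 m_1100010 m_1101000; rewrite /Mtab /=; lia.
have m_1101100 : mu (mkf true true false true true false false) = Mtab true true false true true false false.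
  have := HB true true false true true false false; rewrite /S7 /bsum /le7 /inSb /=; rewrite m_0000000 m_0000100 m_0001000 m_0001100 m_0100000 m_0100100 m_0101000 m_0101100 m_1000000 m_1000100 m_1001000 m_1001100 m_1100000 m_1100100 m_1101000; rewrite /Mtab /=; lia.
have m_1110001 : mu (mkf true true true false false false true) = Mtab true true true false false false true.
  have := HB true true true false false false true; rewrite /S7 /bsum /le7 /inSb /=; rewrite m_0000000 m_0000001 m_0010000 m_0010001 m_0100000 m_0100001 m_0110000 m_0110001 m_1000000 m_1000001 m_1010000 m_1010001 m_1100000 m_1100001 m_1110000; rewrite /Mtab /=; lia.
have m_1110010 : mu (mkf true true true false false true false) = Mtab true true true false false true false.
  have := HB true true true false false true false; rewrite /S7 /bsum /le7 /inSb /=; rewrite m_0000000 m_0000010 m_0010000 m_0010010 m_0100000 m_0100010 m_0110000 m_0110010 m_1000000 m_1000010 m_1010000 m_1010010 m_1100000 m_1100010 m_1110000; rewrite /Mtab /=; lia.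
have m_1110100 : mu (mkf true true true false true false false) = Mtab true true true false true false false.
  have := HB true true true false true false false; rewrite /S7 /bsum /le7 /inSb /=; rewrite m_0000000 m_0000100 m_0010000 m_0010100 m_0100000 m_0100100 m_0110000 m_0110100 m_1000000 m_1000100 m_1010000 m_1010100 m_1100000 m_1100100 m_1110000; rewrite /Mtab /=; lia.
have m_1111000 : mu (mkf true true true true false false false) = Mtab true true true true false false false.
  have := HB true true true true false false false; rewrite /S7 /bsum /le7 /inSb /=; rewrite m_0000000 m_0001000 m_0010000 m_0011000 m_0100000 m_0101000 m_0110000 m_0111000 m_1000000 m_1001000 m_1010000 m_1011000 m_1100000 m_1101000 m_1110000; rewrite /Mtab /=; lia.
have m_0011111 : mu (mkf false false true true true true true) = Mtab false false true true true true true.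
  have := HB false false true true true true true; rewrite /S7 /bsum /le7 /inSb /=; rewrite m_0000000 m_0000001 m_0000010 m_0000011 m_0000100 m_0000101 m_0000110 m_0000111 m_0001000 m_0001001 m_0001010 m_0001011 m_0001100 m_0001101 m_0001110 m_0001111 m_0010000 m_0010001 m_0010010 m_0010011 m_0010100 m_0010101 m_0010110 m_0010111 m_0011000 m_0011001 m_0011010 m_0011011 m_0011100 m_0011101 m_0011110; rewrite /Mtab /=; lia.
have m_0101111 : mu (mkf false true false true true true true) = Mtab false true false true true true true.
  have := HB false true false true true true true; rewrite /S7 /bsum /le7 /inSb /=; rewrite m_0000000 m_0000001 m_0000010 m_0000011 m_0000100 m_0000101 m_0000110 m_0000111 m_0001000 m_0001001 m_0001010 m_0001011 m_0001100 m_0001101 m_0001110 m_0001111 m_0100000 m_0100001 m_0100010 m_0100011 m_0100100 m_0100101 m_0100110 m_0100111 m_0101000 m_0101001 m_0101010 m_0101011 m_0101100 m_0101101 m_0101110; rewrite /Mtab /=; lia.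
have m_0110111 : mu (mkf false true true false true true true) = Mtab false true true false true true true.
  have := HB false true true false true true true; rewrite /S7 /bsum /le7 /inSb /=; rewrite m_0000000 m_0000001 m_0000010 m_0000011 m_0000100 m_0000101 m_0000110 m_0000111 m_0010000 m_0010001 m_0010010 m_0010011 m_0010100 m_0010101 m_0010110 m_0010111 m_0100000 m_0100001 m_0100010 m_0100011 m_0100100 m_0100101 m_0100110 m_0100111 m_0110000 m_0110001 m_0110010 m_0110011 m_0110100 m_0110101 m_0110110; rewrite /Mtab /=; lia.
have m_0111011 : mu (mkf false true true true false true true) = Mtab false true true true false true true.
  have := HB false true true true false true true; rewrite /S7 /bsum /le7 /inSb /=; rewrite m_0000000 m_0000001 m_0000010 m_0000011 m_0001000 m_0001001 m_0001010 m_0001011 m_0010000 m_0010001 m_0010010 m_0010011 m_0011000 m_0011001 m_0011010 m_0011011 m_0100000 m_0100001 m_0100010 m_0100011 m_0101000 m_0101001 m_0101010 m_0101011 m_0110000 m_0110001 m_0110010 m_0110011 m_0111000 m_0111001 m_0111010; rewrite /Mtab /=; lia.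
have m_0111101 : mu (mkf false true true true true false true) = Mtab false true true true true false true.
  have := HB false true true true true false true; rewrite /S7 /bsum /le7 /inSb /=; rewrite m_0000000 m_0000001 m_0000100 m_0000101 m_0001000 m_0001001 m_0001100 m_0001101 m_0010000 m_0010001 m_0010100 m_0010101 m_0011000 m_0011001 m_0011100 m_0011101 m_0100000 m_0100001 m_0100100 m_0100101 m_0101000 m_0101001 m_0101100 m_0101101 m_0110000 m_0110001 m_0110100 m_0110101 m_0111000 m_0111001 m_0111100; rewrite /Mtab /=; lia.
have m_0111110 : mu (mkf false true true true true true false) = Mtab false true true true true true false.
  have := HB false true true true true true false; rewrite /S7 /bsum /le7 /inSb /=; rewrite m_0000000 m_0000010 m_0000100 m_0000110 m_0001000 m_0001010 m_0001100 m_0001110 m_0010000 m_0010010 m_0010100 m_0010110 m_0011000 m_0011010 m_0011100 m_0011110 m_0100000 m_0100010 m_0100100 m_0100110 m_0101000 m_0101010 m_0101100 m_0101110 m_0110000 m_0110010 m_0110100 m_0110110 m_0111000 m_0111010 m_0111100; rewrite /Mtab /=; lia.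
have m_1001111 : mu (mkf true false false true true true true) = Mtab true false false true true true true.
  have := HB true false false true true true true; rewrite /S7 /bsum /le7 /inSb /=; rewrite m_0000000 m_0000001 m_0000010 m_0000011 m_0000100 m_0000101 m_0000110 m_0000111 m_0001000 m_0001001 m_0001010 m_0001011 m_0001100 m_0001101 m_0001110 m_0001111 m_1000000 m_1000001 m_1000010 m_1000011 m_1000100 m_1000101 m_1000110 m_1000111 m_1001000 m_1001001 m_1001010 m_1001011 m_1001100 m_1001101 m_1001110; rewrite /Mtab /=; lia.
have m_1010111 : mu (mkf true false true false true true true) = Mtab true false true false true true true.
  have := HB true false true false true true true; rewrite /S7 /bsum /le7 /inSb /=; rewrite m_0000000 m_0000001 m_0000010 m_0000011 m_0000100 m_0000101 m_0000110 m_0000111 m_0010000 m_0010001 m_0010010 m_0010011 m_0010100 m_0010101 m_0010110 m_0010111 m_1000000 m_1000001 m_1000010 m_1000011 m_1000100 m_1000101 m_1000110 m_1000111 m_1010000 m_1010001 m_1010010 m_1010011 m_1010100 m_1010101 m_1010110; rewrite /Mtab /=; lia.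
have m_1011011 : mu (mkf true false true true false true true) = Mtab true false true true false true true.
  have := HB true false true true false true true; rewrite /S7 /bsum /le7 /inSb /=; rewrite m_0000000 m_0000001 m_0000010 m_0000011 m_0001000 m_0001001 m_0001010 m_0001011 m_0010000 m_0010001 m_0010010 m_0010011 m_0011000 m_0011001 m_0011010 m_0011011 m_1000000 m_1000001 m_1000010 m_1000011 m_1001000 m_1001001 m_1001010 m_1001011 m_1010000 m_1010001 m_1010010 m_1010011 m_1011000 m_1011001 m_1011010; rewrite /Mtab /=; lia.
have m_1011101 : mu (mkf true false true true true false true) = Mtab true false true true true false true.
  have := HB true false true true true false true; rewrite /S7 /bsum /le7 /inSb /=; rewrite m_0000000 m_0000001 m_0000100 m_0000101 m_0001000 m_0001001 m_0001100 m_0001101 m_0010000 m_0010001 m_0010100 m_0010101 m_0011000 m_0011001 m_0011100 m_0011101 m_1000000 m_1000001 m_1000100 m_1000101 m_1001000 m_1001001 m_1001100 m_1001101 m_1010000 m_1010001 m_1010100 m_1010101 m_1011000 m_1011001 m_1011100; rewrite /Mtab /=; lia.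
have m_1011110 : mu (mkf true false true true true true false) = Mtab true false true true true true false.
  have := HB true false true true true true false; rewrite /S7 /bsum /le7 /inSb /=; rewrite m_0000000 m_0000010 m_0000100 m_0000110 m_0001000 m_0001010 m_0001100 m_0001110 m_0010000 m_0010010 m_0010100 m_0010110 m_0011000 m_0011010 m_0011100 m_0011110 m_1000000 m_1000010 m_1000100 m_1000110 m_1001000 m_1001010 m_1001100 m_1001110 m_1010000 m_1010010 m_1010100 m_1010110 m_1011000 m_1011010 m_1011100; rewrite /Mtab /=; lia.
have m_1100111 : mu (mkf true true false false true true true) = Mtab true true false false true true true.
  have := HB true true false false true true true; rewrite /S7 /bsum /le7 /inSb /=; rewrite m_0000000 m_0000001 m_0000010 m_0000011 m_0000100 m_0000101 m_0000110 m_0000111 m_0100000 m_0100001 m_0100010 m_0100011 m_0100100 m_0100101 m_0100110 m_0100111 m_1000000 m_1000001 m_1000010 m_1000011 m_1000100 m_1000101 m_1000110 m_1000111 m_1100000 m_1100001 m_1100010 m_1100011 m_1100100 m_1100101 m_1100110; rewrite /Mtab /=; lia.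
have m_1101011 : mu (mkf true true false true false true true) = Mtab true true false true false true true.
  have := HB true true false true false true true; rewrite /S7 /bsum /le7 /inSb /=; rewrite m_0000000 m_0000001 m_0000010 m_0000011 m_0001000 m_0001001 m_0001010 m_0001011 m_0100000 m_0100001 m_0100010 m_0100011 m_0101000 m_0101001 m_0101010 m_0101011 m_1000000 m_1000001 m_1000010 m_1000011 m_1001000 m_1001001 m_1001010 m_1001011 m_1100000 m_1100001 m_1100010 m_1100011 m_1101000 m_1101001 m_1101010; rewrite /Mtab /=; lia.
have m_1101101 : mu (mkf true true false true true false true) = Mtab true true false true true false true.
  have := HB true true false true true false true; rewrite /S7 /bsum /le7 /inSb /=; rewrite m_0000000 m_0000001 m_0000100 m_0000101 m_0001000 m_0001001 m_0001100 m_0001101 m_0100000 m_0100001 m_0100100 m_0100101 m_0101000 m_0101001 m_0101100 m_0101101 m_1000000 m_1000001 m_1000100 m_1000101 m_1001000 m_1001001 m_1001100 m_1001101 m_1100000 m_1100001 m_1100100 m_1100101 m_1101000 m_1101001 m_1101100; rewrite /Mtab /=; lia.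
have m_1101110 : mu (mkf true true false true true true false) = Mtab true true false true true true false.
  have := HB true true false true true true false; rewrite /S7 /bsum /le7 /inSb /=; rewrite m_0000000 m_0000010 m_0000100 m_0000110 m_0001000 m_0001010 m_0001100 m_0001110 m_0100000 m_0100010 m_0100100 m_0100110 m_0101000 m_0101010 m_0101100 m_0101110 m_1000000 m_1000010 m_1000100 m_1000110 m_1001000 m_1001010 m_1001100 m_1001110 m_1100000 m_1100010 m_1100100 m_1100110 m_1101000 m_1101010 m_1101100; rewrite /Mtab /=; lia.
have m_1110011 : mu (mkf true true true false false true true) = Mtab true true true false false true true.
  have := HB true true true false false true true; rewrite /S7 /bsum /le7 /inSb /=; rewrite m_0000000 m_0000001 m_0000010 m_0000011 m_0010000 m_0010001 m_0010010 m_0010011 m_0100000 m_0100001 m_0100010 m_0100011 m_0110000 m_0110001 m_0110010 m_0110011 m_1000000 m_1000001 m_1000010 m_1000011 m_1010000 m_1010001 m_1010010 m_1010011 m_1100000 m_1100001 m_1100010 m_1100011 m_1110000 m_1110001 m_1110010; rewrite /Mtab /=; lia.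
have m_1110101 : mu (mkf true true true false true false true) = Mtab true true true false true false true.
  have := HB true true true false true false true; rewrite /S7 /bsum /le7 /inSb /=; rewrite m_0000000 m_0000001 m_0000100 m_0000101 m_0010000 m_0010001 m_0010100 m_0010101 m_0100000 m_0100001 m_0100100 m_0100101 m_0110000 m_0110001 m_0110100 m_0110101 m_1000000 m_1000001 m_1000100 m_1000101 m_1010000 m_1010001 m_1010100 m_1010101 m_1100000 m_1100001 m_1100100 m_1100101 m_1110000 m_1110001 m_1110100; rewrite /Mtab /=; lia.
have m_1110110 : mu (mkf true true true false true true false) = Mtab true true true false true true false.
  have := HB true true true false true true false; rewrite /S7 /bsum /le7 /inSb /=; rewrite m_0000000 m_0000010 m_0000100 m_0000110 m_0010000 m_0010010 m_0010100 m_0010110 m_0100000 m_0100010 m_0100100 m_0100110 m_0110000 m_0110010 m_0110100 m_0110110 m_1000000 m_1000010 m_1000100 m_1000110 m_1010000 m_1010010 m_1010100 m_1010110 m_1100000 m_1100010 m_1100100 m_1100110 m_1110000 m_1110010 m_1110100; rewrite /Mtab /=; lia.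
have m_1111001 : mu (mkf true true true true false false true) = Mtab true true true true false false true.
  have := HB true true true true false false true; rewrite /S7 /bsum /le7 /inSb /=; rewrite m_0000000 m_0000001 m_0001000 m_0001001 m_0010000 m_0010001 m_0011000 m_0011001 m_0100000 m_0100001 m_0101000 m_0101001 m_0110000 m_0110001 m_0111000 m_0111001 m_1000000 m_1000001 m_1001000 m_1001001 m_1010000 m_1010001 m_1011000 m_1011001 m_1100000 m_1100001 m_1101000 m_1101001 m_1110000 m_1110001 m_1111000; rewrite /Mtab /=; lia.
have m_1111010 : mu (mkf true true true true false true false) = Mtab true true true true false true false.
  have := HB true true true true false true false; rewrite /S7 /bsum /le7 /inSb /=; rewrite m_0000000 m_0000010 m_0001000 m_0001010 m_0010000 m_0010010 m_0011000 m_0011010 m_0100000 m_0100010 m_0101000 m_0101010 m_0110000 m_0110010 m_0111000 m_0111010 m_1000000 m_1000010 m_1001000 m_1001010 m_1010000 m_1010010 m_1011000 m_1011010 m_1100000 m_1100010 m_1101000 m_1101010 m_1110000 m_1110010 m_1111000; rewrite /Mtab /=; lia.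
have m_1111100 : mu (mkf true true true true true false false) = Mtab true true true true true false false.
  have := HB true true true true true false false; rewrite /S7 /bsum /le7 /inSb /=; rewrite m_0000000 m_0000100 m_0001000 m_0001100 m_0010000 m_0010100 m_0011000 m_0011100 m_0100000 m_0100100 m_0101000 m_0101100 m_0110000 m_0110100 m_0111000 m_0111100 m_1000000 m_1000100 m_1001000 m_1001100 m_1010000 m_1010100 m_1011000 m_1011100 m_1100000 m_1100100 m_1101000 m_1101100 m_1110000 m_1110100 m_1111000; rewrite /Mtab /=; lia.
have m_0111111 : mu (mkf false true true true true true true) = Mtab false true true true true true true.
  have := HB false true true true true true true; rewrite /S7 /bsum /le7 /inSb /=; rewrite m_0000000 m_0000001 m_0000010 m_0000011 m_0000100 m_0000101 m_0000110 m_0000111 m_0001000 m_0001001 m_0001010 m_0001011 m_0001100 m_0001101 m_0001110 m_0001111 m_0010000 m_0010001 m_0010010 m_0010011 m_0010100 m_0010101 m_0010110 m_0010111 m_0011000 m_0011001 m_0011010 m_0011011 m_0011100 m_0011101 m_0011110 m_0011111 m_0100000 m_0100001 m_0100010 m_0100011 m_0100100 m_0100101 m_0100110 m_0100111 m_0101000 m_0101001 m_0101010 m_0101011 m_0101100 m_0101101 m_0101110 m_0101111 m_0110000 m_0110001 m_0110010 m_0110011 m_0110100 m_0110101 m_0110110 m_0110111 m_0111000 m_0111001 m_0111010 m_0111011 m_0111100 m_0111101 m_0111110; rewrite /Mtab /=; lia.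
have m_1011111 : mu (mkf true false true true true true true) = Mtab true false true true true true true.
  have := HB true false true true true true true; rewrite /S7 /bsum /le7 /inSb /=; rewrite m_0000000 m_0000001 m_0000010 m_0000011 m_0000100 m_0000101 m_0000110 m_0000111 m_0001000 m_0001001 m_0001010 m_0001011 m_0001100 m_0001101 m_0001110 m_0001111 m_0010000 m_0010001 m_0010010 m_0010011 m_0010100 m_0010101 m_0010110 m_0010111 m_0011000 m_0011001 m_0011010 m_0011011 m_0011100 m_0011101 m_0011110 m_0011111 m_1000000 m_1000001 m_1000010 m_1000011 m_1000100 m_1000101 m_1000110 m_1000111 m_1001000 m_1001001 m_1001010 m_1001011 m_1001100 m_1001101 m_1001110 m_1001111 m_1010000 m_1010001 m_1010010 m_1010011 m_1010100 m_1010101 m_1010110 m_1010111 m_1011000 m_1011001 m_1011010 m_1011011 m_1011100 m_1011101 m_1011110; rewrite /Mtab /=; lia.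
have m_1101111 : mu (mkf true true false true true true true) = Mtab true true false true true true true.
  have := HB true true false true true true true; rewrite /S7 /bsum /le7 /inSb /=; rewrite m_0000000 m_0000001 m_0000010 m_0000011 m_0000100 m_0000101 m_0000110 m_0000111 m_0001000 m_0001001 m_0001010 m_0001011 m_0001100 m_0001101 m_0001110 m_0001111 m_0100000 m_0100001 m_0100010 m_0100011 m_0100100 m_0100101 m_0100110 m_0100111 m_0101000 m_0101001 m_0101010 m_0101011 m_0101100 m_0101101 m_0101110 m_0101111 m_1000000 m_1000001 m_1000010 m_1000011 m_1000100 m_1000101 m_1000110 m_1000111 m_1001000 m_1001001 m_1001010 m_1001011 m_1001100 m_1001101 m_1001110 m_1001111 m_1100000 m_1100001 m_1100010 m_1100011 m_1100100 m_1100101 m_1100110 m_1100111 m_1101000 m_1101001 m_1101010 m_1101011 m_1101100 m_1101101 m_1101110; rewrite /Mtab /=; lia.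
have m_1110111 : mu (mkf true true true false true true true) = Mtab true true true false true true true.
  have := HB true true true false true true true; rewrite /S7 /bsum /le7 /inSb /=; rewrite m_0000000 m_0000001 m_0000010 m_0000011 m_0000100 m_0000101 m_0000110 m_0000111 m_0010000 m_0010001 m_0010010 m_0010011 m_0010100 m_0010101 m_0010110 m_0010111 m_0100000 m_0100001 m_0100010 m_0100011 m_0100100 m_0100101 m_0100110 m_0100111 m_0110000 m_0110001 m_0110010 m_0110011 m_0110100 m_0110101 m_0110110 m_0110111 m_1000000 m_1000001 m_1000010 m_1000011 m_1000100 m_1000101 m_1000110 m_1000111 m_1010000 m_1010001 m_1010010 m_1010011 m_1010100 m_1010101 m_1010110 m_1010111 m_1100000 m_1100001 m_1100010 m_1100011 m_1100100 m_1100101 m_1100110 m_1100111 m_1110000 m_1110001 m_1110010 m_1110011 m_1110100 m_1110101 m_1110110; rewrite /Mtab /=; lia.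
have m_1111011 : mu (mkf true true true true false true true) = Mtab true true true true false true true.
  have := HB true true true true false true true; rewrite /S7 /bsum /le7 /inSb /=; rewrite m_0000000 m_0000001 m_0000010 m_0000011 m_0001000 m_0001001 m_0001010 m_0001011 m_0010000 m_0010001 m_0010010 m_0010011 m_0011000 m_0011001 m_0011010 m_0011011 m_0100000 m_0100001 m_0100010 m_0100011 m_0101000 m_0101001 m_0101010 m_0101011 m_0110000 m_0110001 m_0110010 m_0110011 m_0111000 m_0111001 m_0111010 m_0111011 m_1000000 m_1000001 m_1000010 m_1000011 m_1001000 m_1001001 m_1001010 m_1001011 m_1010000 m_1010001 m_1010010 m_1010011 m_1011000 m_1011001 m_1011010 m_1011011 m_1100000 m_1100001 m_1100010 m_1100011 m_1101000 m_1101001 m_1101010 m_1101011 m_1110000 m_1110001 m_1110010 m_1110011 m_1111000 m_1111001 m_1111010; rewrite /Mtab /=; lia.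
have m_1111101 : mu (mkf true true true true true false true) = Mtab true true true true true false true.
  have := HB true true true true true false true; rewrite /S7 /bsum /le7 /inSb /=; rewrite m_0000000 m_0000001 m_0000100 m_0000101 m_0001000 m_0001001 m_0001100 m_0001101 m_0010000 m_0010001 m_0010100 m_0010101 m_0011000 m_0011001 m_0011100 m_0011101 m_0100000 m_0100001 m_0100100 m_0100101 m_0101000 m_0101001 m_0101100 m_0101101 m_0110000 m_0110001 m_0110100 m_0110101 m_0111000 m_0111001 m_0111100 m_0111101 m_1000000 m_1000001 m_1000100 m_1000101 m_1001000 m_1001001 m_1001100 m_1001101 m_1010000 m_1010001 m_1010100 m_1010101 m_1011000 m_1011001 m_1011100 m_1011101 m_1100000 m_1100001 m_1100100 m_1100101 m_1101000 m_1101001 m_1101100 m_1101101 m_1110000 m_1110001 m_1110100 m_1110101 m_1111000 m_1111001 m_1111100; rewrite /Mtab /=; lia.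
have m_1111110 : mu (mkf true true true true true true false) = Mtab true true true true true true false.
  have := HB true true true true true true false; rewrite /S7 /bsum /le7 /inSb /=; rewrite m_0000000 m_0000010 m_0000100 m_0000110 m_0001000 m_0001010 m_0001100 m_0001110 m_0010000 m_0010010 m_0010100 m_0010110 m_0011000 m_0011010 m_0011100 m_0011110 m_0100000 m_0100010 m_0100100 m_0100110 m_0101000 m_0101010 m_0101100 m_0101110 m_0110000 m_0110010 m_0110100 m_0110110 m_0111000 m_0111010 m_0111100 m_0111110 m_1000000 m_1000010 m_1000100 m_1000110 m_1001000 m_1001010 m_1001100 m_1001110 m_1010000 m_1010010 m_1010100 m_1010110 m_1011000 m_1011010 m_1011100 m_1011110 m_1100000 m_1100010 m_1100100 m_1100110 m_1101000 m_1101010 m_1101100 m_1101110 m_1110000 m_1110010 m_1110100 m_1110110 m_1111000 m_1111010 m_1111100; rewrite /Mtab /=; lia.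
have m_1111111 : mu (mkf true true true true true true true) = Mtab true true true true true true true.
  have := HB true true true true true true true; rewrite /S7 /bsum /le7 /inSb /=; rewrite m_0000000 m_0000001 m_0000010 m_0000011 m_0000100 m_0000101 m_0000110 m_0000111 m_0001000 m_0001001 m_0001010 m_0001011 m_0001100 m_0001101 m_0001110 m_0001111 m_0010000 m_0010001 m_0010010 m_0010011 m_0010100 m_0010101 m_0010110 m_0010111 m_0011000 m_0011001 m_0011010 m_0011011 m_0011100 m_0011101 m_0011110 m_0011111 m_0100000 m_0100001 m_0100010 m_0100011 m_0100100 m_0100101 m_0100110 m_0100111 m_0101000 m_0101001 m_0101010 m_0101011 m_0101100 m_0101101 m_0101110 m_0101111 m_0110000 m_0110001 m_0110010 m_0110011 m_0110100 m_0110101 m_0110110 m_0110111 m_0111000 m_0111001 m_0111010 m_0111011 m_0111100 m_0111101 m_0111110 m_0111111 m_1000000 m_1000001 m_1000010 m_1000011 m_1000100 m_1000101 m_1000110 m_1000111 m_1001000 m_1001001 m_1001010 m_1001011 m_1001100 m_1001101 m_1001110 m_1001111 m_1010000 m_1010001 m_1010010 m_1010011 m_1010100 m_1010101 m_1010110 m_1010111 m_1011000 m_1011001 m_1011010 m_1011011 m_1011100 m_1011101 m_1011110 m_1011111 m_1100000 m_1100001 m_1100010 m_1100011 m_1100100 m_1100101 m_1100110 m_1100111 m_1101000 m_1101001 m_1101010 m_1101011 m_1101100 m_1101101 m_1101110 m_1101111 m_1110000 m_1110001 m_1110010 m_1110011 m_1110100 m_1110101 m_1110110 m_1110111 m_1111000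 m_1111001 m_1111010 m_1111011 m_1111100 m_1111101 m_1111110; rewrite /Mtab /=; lia.

by case; case; case; case; case; case; case; assumption.
Qed.

End P2.
Import P2.

Module P3.
Set Implicit Arguments. Unset Strict Implicit.
Local Open Scope ring_scope.
Arguments mkf : simpl never.

Section Dens.
Variables (R : realType) (K : finFieldType).
Let q : R := #|K|%:R.

Definition Pc (u v : bool) (x y : K) := (u ==> (x == 0)) && (v ==> (y == 0)).
Definition aa (u v : bool) : R := if ~~ u && ~~ v then q - 1 else 0.
Definition bb (u v : bool) : R := if u && v then 1 else q.
Definition t1 (u : bool) : R := if u then 1 else q.
Definition tt (u v : bool) : R := t1 u * t1 v.

Lemma sum_eq0 (F : K -> R) : \sum_(a : K) (if a == 0 then F a else 0) = F 0.
Proof. by rewrite -big_mkcond big_pred1_eq. Qed.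

Lemma sum_cst (c : R) : \sum_(a : K) c = q * c.
Proof. by rewrite sumr_const -mulr_natl. Qed.

Lemma sum_t1 (u : bool) (F : K -> R) (c : R) : (forall a, F a = c) ->
  \sum_(a : K) (if u ==> (a == 0) then F a else 0) = t1 u * c.
Proof.
move=> hF; case: u => /=; first by rewrite sum_eq0 hF mul1r.
by rewrite /t1 -sum_cst; apply: eq_bigr => a _; rewrite hF.
Qed.

Lemma sum_lin (a0 : K) (s : K) : a0 != 0 ->
  \sum_(b : K) ((s + a0 * b == 0)%:R : R) = 1.
Proof.
move=> ha; rewrite (eq_bigr (fun b => if b == - s / a0 then 1 else 0)).
  by rewrite -big_mkcond big_pred1_eq.
move=> b _; have -> : (s + a0 * b == 0) = (b == - s / a0).
  rewrite addrC addr_eq0; apply/eqP/eqP => [h|->]; last by rewrite mulrC divfK.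
  by rewrite -h mulrC mulKf.
by case: (_ == _).
Qed.

Lemma q_pos : (0 < #|K|)%N.
Proof. by apply/card_gt0P; exists 0. Qed.

Lemma sum_xy (s : K) :
  \sum_(a : K) \sum_(b : K) ((s + a * b == 0)%:R : R) = (q - 1) + q * (s == 0)%:R.
Proof.
rewrite (bigD1 0) //= (eq_bigr (fun _ => ((s == 0)%:R : R))); last first.
  by move=> b _; rewrite mul0r addr0.
rewrite sum_cst (eq_bigr (fun _ => 1)); last by move=> a ha; rewrite sum_lin.
rewrite sumr_const (_ : #|_| = #|predC1 (0:K)|) // cardC1 /q.
move: q_pos; case: #|K| => // n _ /=; rewrite -addn1 natrD; ring.
Qed.

Lemma pairF (u v : bool) (g : K -> R) (c d : R) (s : K) :
  (forall z, g z = c + d * (z == 0)%:R) ->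
  \sum_(a : K) \sum_(b : K) (if Pc u v a b then g (s + a * b) else 0)
  = c * tt u v + d * (aa u v + bb u v * (s == 0)%:R).
Proof.
move=> hg.
transitivity (\sum_(a : K) (if u ==> (a == 0) then
   \sum_(b : K) (if v ==> (b == 0) then c + d * (s + a * b == 0)%:R else 0) else 0)).
  apply: eq_bigr => a _; rewrite /Pc; case: (u ==> _); last by rewrite big1.
  by apply: eq_bigr => b _; rewrite hg.
rewrite /tt /aa /bb; case: u; case: v => /=.
- rewrite sum_eq0 sum_eq0 mul0r addr0 /t1; ring.
- rewrite sum_eq0 (eq_bigr (fun b => c + d * (s == 0)%:R)); last first.
    by move=> b _; rewrite mul0r addr0.
  rewrite sum_cst /t1; ring.
- rewrite (eq_bigr (fun a => c + d * (s == 0)%:R)); last first.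
    by move=> a _; rewrite sum_eq0 mulr0 addr0.
  rewrite sum_cst /t1; ring.
- rewrite (eq_bigr (fun a => q * c + d * \sum_(b : K) ((s + a * b == 0)%:R : R))); last first.
    by move=> a _; rewrite big_split /= -big_distrr /= sum_cst.
  rewrite big_split /= -!big_distrr /= sum_xy sum_cst /t1; ring.
Qed.

Definition mkfP (T : Type) (t0 a1 b1 a2 b2 a3 b3 : T) : {ffun 'I_7 -> T} :=
  mkf t0 a1 a2 a3 b1 b2 b3.

Lemma mkfP_bij (T : finType) :
  bijective (fun p : T * T * T * T * T * T * T =>
    mkfP p.1.1.1.1.1.1 p.1.1.1.1.1.2 p.1.1.1.1.2 p.1.1.1.2 p.1.1.2 p.1.2 p.2).
Proof.
exists (fun f : {ffun 'I_7 -> T} =>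
  (f (inord 0), f (inord 1), f (inord 4), f (inord 2), f (inord 5), f (inord 3), f (inord 6))).
  case=> [[[[[[a b] c] d] e] g] h].
  by rewrite /mkfP !mkfE.
move=> f; apply/ffunP => i; rewrite /mkfP ffunE.
have -> : i = inord i by rewrite inord_val.
by case: i => [[|[|[|[|[|[|[|k]]]]]]] hk]; rewrite ?inordK.
Qed.

Lemma sum_ffunP (V : nmodType) (T : finType) (F : {ffun 'I_7 -> T} -> V) :
  \sum_(f : {ffun 'I_7 -> T}) F f =
  \sum_(t0 : T) \sum_(t1 : T) \sum_(t2 : T) \sum_(t3 : T) \sum_(t4 : T)
   \sum_(t5 : T) \sum_(t6 : T) F (mkfP t0 t1 t2 t3 t4 t5 t6).
Proof.
rewrite !pair_big.
rewrite (reindex _ (onW_bij _ (@mkfP_bij T))).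
by apply: eq_big => // -[[[[[[a b] c] d] e] g] h].
Qed.

Lemma forall_mkf b0 b1 b2 b3 b4 b5 b6 (f : {ffun 'I_7 -> K}) :
  [forall i, mkf b0 b1 b2 b3 b4 b5 b6 i ==> (f i == 0)] =
  [&& b0 ==> (f (inord 0) == 0), b1 ==> (f (inord 1) == 0), b2 ==> (f (inord 2) == 0),
      b3 ==> (f (inord 3) == 0), b4 ==> (f (inord 4) == 0), b5 ==> (f (inord 5) == 0)
    & b6 ==> (f (inord 6) == 0)].
Proof.
apply/forallP/idP.
  move=> H; move: (H (inord 0)) (H (inord 1)) (H (inord 2)) (H (inord 3)) (H (inord 4)) (H (inord 5)) (H (inord 6)).
  by rewrite !mkfE //= => -> -> -> -> -> -> ->.
move=> /andP[h0 /andP[h1 /andP[h2 /andP[h3 /andP[h4 /andP[h5 h6]]]]]] i.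
have -> : i = inord i by rewrite inord_val.
by case: i => [[|[|[|[|[|[|[|k]]]]]]] hk]; rewrite ?mkfE.
Qed.

Lemma sum_if (I : finType) (c : bool) (F : I -> R) :
  (if c then \sum_(i : I) F i else 0) = \sum_(i : I) (if c then F i else 0).
Proof. by case: c; rewrite // big1. Qed.

Lemma densE b0 b1 b2 b3 b4 b5 b6 :
  dens_S R K (mkf b0 b1 b2 b3 b4 b5 b6) = (q ^+ 6)^-1 *
   (t1 b0 * ((aa b3 b6 * tt b2 b5 + bb b3 b6 * aa b2 b5) * tt b1 b4
             + bb b3 b6 * bb b2 b5 * (aa b1 b4 + bb b1 b4))).
Proof.
rewrite /dens_S; congr (_ * _).
pose G3 (s : K) := \sum_(a : K) \sum_(b : K) (if Pc b3 b6 a b then ((s + a * b == 0)%:R : R) else 0).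
pose G2 (s : K) := \sum_(a : K) \sum_(b : K) (if Pc b2 b5 a b then G3 (s + a * b) else 0).
pose G1 (s : K) := \sum_(a : K) \sum_(b : K) (if Pc b1 b4 a b then G2 (s + a * b) else 0).
have E3 z : G3 z = aa b3 b6 + bb b3 b6 * (z == 0)%:R.
  rewrite /G3 (@pairF b3 b6 (fun z => (z == 0)%:R) 0 1) /= ?mul0r ?add0r ?mul1r //.
  by move=> w; rewrite add0r mul1r.
have E2 z : G2 z = (aa b3 b6 * tt b2 b5 + bb b3 b6 * aa b2 b5) + bb b3 b6 * bb b2 b5 * (z == 0)%:R.
  rewrite /G2 (@pairF b2 b5 G3 (aa b3 b6) (bb b3 b6) z E3).
  move: (aa _ _) (bb _ _) (tt _ _) (aa _ _) (bb _ _) ((z == 0)%:R) => A B C D E F; ring.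
have E1 : G1 0 = (aa b3 b6 * tt b2 b5 + bb b3 b6 * aa b2 b5) * tt b1 b4
             + bb b3 b6 * bb b2 b5 * (aa b1 b4 + bb b1 b4).
  rewrite /G1 (@pairF b1 b4 G2 _ _ 0 E2) eqxx mulr1; ring.
rewrite -E1 -(@sum_t1 b0 (fun _ => G1 0)) //.
rewrite cardsE -sum1_card natr_sum big_mkcond /= sum_ffunP.
apply: eq_bigr => t0 _; rewrite /G1 sum_if.
apply: eq_bigr => a1 _; rewrite sum_if.
apply: eq_bigr => y1 _; rewrite /G2 !sum_if.
apply: eq_bigr => a2 _; rewrite !sum_if.
apply: eq_bigr => y2 _; rewrite /G3 !sum_if.
apply: eq_bigr => a3 _; rewrite !sum_if.
apply: eq_bigr => y3 _.
rewrite unfold_in /mkfP forall_mkf !mkfE // /Pc /= add0r.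
by do 7 case: (_ ==> _) => //=; case: (_ == 0).
Qed.

End Dens.

End P3.
Import P3.

Module P4.
Import numFieldNormedType.Exports.
Set Implicit Arguments. Unset Strict Implicit.
Local Open Scope classical_set_scope.
Local Open Scope ring_scope.

Section Geo.
Variable R : realType.
Local Open Scope ereal_scope.

Lemma geoE (z : R) : (0 <= z < 1)%R -> \sum_(i <oo) (z ^+ i)%:E = ((1 - z)^-1)%:E.
Proof.
move=> /andP[z0 z1].
have hz : (`|z| < 1)%R by rewrite ger0_norm.
have h := @cvg_geometric_series R 1 z hz.
have -> : \sum_(i <oo) (z ^+ i)%:E = limn (EFin \o series (geometric 1 z)).
  apply/congr_lim/funext => n /=; rewrite sumEFin /series /=; congr EFin.
  by apply: eq_bigr => i _; rewrite /geometric /= mul1r.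
rewrite EFin_lim ?(cvg_lim _ h) ?mul1r //; by rewrite div1r in h.
Qed.

Lemma geoN (z : R) (N : nat) : (0 <= z < 1)%R ->
  \esum_(c in [set c | (N <= c)%N]) (z ^+ c)%:E = (z ^+ N / (1 - z))%:E.
Proof.
move=> /[dup] hz /andP[z0 z1].
rewrite -nneseries_esum; last by move=> n _; rewrite lee_fin exprn_ge0.
rewrite -(@eseries_cond R _ xpredT N) -nneseries_addn; last by move=> i; rewrite lee_fin exprn_ge0.
rewrite (eq_eseriesr (g := fun i => (z ^+ N)%:E * (z ^+ i)%:E)); last first.
  by move=> i _; rewrite -EFinM exprD mulrC.
by rewrite nneseriesZl ?geoE // => i _; rewrite lee_fin exprn_ge0.
Qed.

End Geo.

Section FF.
Variables (R : realType) (q : R).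
Hypothesis hq : 1 < q.
Local Notation r := (q^-1).

Lemma q_gt0 : 0 < q. Proof. exact: lt_trans hq. Qed.
Lemma r_gt0 : 0 < r. Proof. by rewrite invr_gt0 q_gt0. Qed.
Lemma r_lt1 : r < 1. Proof. by rewrite invf_lt1 // q_gt0. Qed.
Lemma r_ge0 : 0 <= r. Proof. exact: ltW r_gt0. Qed.
Lemma r01 : 0 <= r < 1. Proof. by rewrite r_ge0 r_lt1. Qed.
Lemma qr : q * r = 1. Proof. by rewrite mulfV // gt_eqF // q_gt0. Qed.

Definition w (k : nat) : R := if k is k'.+1 then q ^+ k'.+1 - q ^+ k' else 1.

Lemma w_ge0 k : 0 <= w k.
Proof.
case: k => [|k] //=; rewrite subr_ge0 exprS ler_peMl ?exprn_ge0 ?(ltW q_gt0) //.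
exact: ltW.
Qed.

Lemma sum_w m : \sum_(k < m.+1) w k = q ^+ m.
Proof.
elim: m => [|m ih]; first by rewrite big_ord_recr big_ord0 /= add0r expr0.
by rewrite big_ord_recr /= ih addrC subrK.
Qed.

Lemma rX_ge0 n : 0 <= r ^+ n. Proof. exact: exprn_ge0 r_ge0. Qed.

Local Open Scope ereal_scope.

Lemma step1 (m N : nat) :
  ((q ^+ m / q ^+ N)%:E : \bar R) =
  \esum_(k in [set k | (k <= m)%N]) (w k * r ^+ N)%:E.
Proof.
have f0 : forall k, 0 <= (w k * r ^+ N)%:E.
  by move=> k; rewrite lee_fin mulr_ge0 ?w_ge0 ?rX_ge0.
rewrite -nneseries_esum; last by move=> k _; exact: f0.
rewrite (nneseries_split_cond 0 m.+1) // add0n.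
rewrite eseries0 ?adde0; last by move=> i hi him; move: (leq_trans hi him); rewrite ltnn.
rewrite sumEFin big_mkord (eq_bigl (fun _ => true)); last by move=> i; rewrite -ltnS ltn_ord.
by rewrite -big_distrl /= sum_w exprVn.
Qed.


Lemma esum_swap (T1 T2 : choiceType) (Rl : T1 -> T2 -> Prop) (f : T1 -> T2 -> \bar R) :
  (forall i j, 0 <= f i j) ->
  \esum_(i in [set: T1]) \esum_(j in [set j | Rl i j]) f i j =
  \esum_(j in [set: T2]) \esum_(i in [set i | Rl i j]) f i j.
Proof.
move=> f0; rewrite !esum_esum //.
rewrite (reindex_esum ([set: T2] `*`` (fun j => [set i | Rl i j]))
   ([set: T1] `*`` (fun i => [set j | Rl i j])) (fun p => (p.2, p.1))) //=.
split.
- by move=> [j i] /= [_ h].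
- by move=> [j1 i1] [j2 i2] _ _ /= [-> ->].
- by move=> [i j] /= [_ h]; exists (j, i).
Qed.

Lemma esumX (I : choiceType) (A : set I) (P : pred nat) (F : I -> R) (h : nat -> R) (c : R) :
  (forall i, (0 <= F i)%R) -> (forall j, (0 <= h j)%R) ->
  \esum_(j in [set j | P j]) (h j)%:E = c%:E ->
  \esum_(p in A `*`` (fun _ => [set j | P j])) (F p.1 * h p.2)%:E = \esum_(i in A) (F i * c)%:E.
Proof.
move=> F0 h0 hc.
rewrite -(@esum_esum _ _ _ A (fun _ => [set j | P j]) (fun i j => (F i * h j)%:E)); last first.
  by move=> i j _ _; rewrite lee_fin mulr_ge0.
apply: eq_esum => i _.
rewrite -nneseries_esum; last by move=> j _; rewrite lee_fin mulr_ge0.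
rewrite (eq_eseriesr (g := fun j => (F i)%:E * (h j)%:E)); last by move=> j _; rewrite EFinM.
rewrite nneseriesZl; last by move=> j _; rewrite lee_fin.
by rewrite nneseries_esum ?hc -?EFinM // => j _; rewrite lee_fin.
Qed.

Lemma esumN (C : R) (N : nat) : (0 <= C)%R ->
  \esum_(a in [set a | (N <= a)%N]) (C * r ^+ a)%:E = (C * (r ^+ N / (1 - r)))%:E.
Proof.
move=> C0; rewrite -nneseries_esum; last by move=> a _; rewrite lee_fin mulr_ge0 ?rX_ge0.
rewrite (eq_eseriesr (g := fun a => C%:E * (r ^+ a)%:E)); last by move=> a _; rewrite EFinM.
rewrite nneseriesZl; last by move=> a _; rewrite lee_fin rX_ge0.
by rewrite nneseries_esum ?geoN ?r01 -?EFinM // => a _; rewrite lee_fin rX_ge0.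
Qed.

Definition G (k x : nat) : R := r ^+ (k - x) / (1 - r).

Lemma G_ge0 k x : (0 <= G k x)%R.
Proof. by rewrite /G divr_ge0 ?rX_ge0 // subr_ge0 ltW // r_lt1. Qed.

Lemma F_closed (x y z : nat) :
  \esum_(n in [set: nat * nat * nat])
     ((q ^+ minn (n.1.1 + x) (minn (n.1.2 + y) (n.2 + z))) / q ^+ (n.1.1 + n.1.2 + n.2))%:E
  = \esum_(k in [set: nat]) (w k * G k x * G k y * G k z)%:E.
Proof.
under eq_esum do rewrite step1.
rewrite (@esum_swap _ _ (fun n k => (k <= minn (n.1.1 + x) (minn (n.1.2 + y) (n.2 + z)))%N)
   (fun n k => (w k * r ^+ (n.1.1 + n.1.2 + n.2))%:E)); last first.
  by move=> n k; rewrite lee_fin mulr_ge0 ?w_ge0 ?rX_ge0.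
apply: eq_esum => k _.
have -> : [set n : nat * nat * nat | (k <= minn (n.1.1 + x) (minn (n.1.2 + y) (n.2 + z)))%N] =
   ([set a | (k - x <= a)%N] `*`` (fun _ => [set b | (k - y <= b)%N])) `*``
      (fun _ => [set c | (k - z <= c)%N]).
  apply/seteqP; split => -[[a b] c] /=; rewrite !leq_subLR (addnC x) (addnC y) (addnC z) !leq_min.
    by move=> /and3P[-> -> ->].
  by move=> [[-> ->] ->].
rewrite (eq_esum (b := fun p : nat * nat * nat => ((w k * r ^+ p.1.1 * r ^+ p.1.2) * r ^+ p.2)%R%:E)); last first.
  by move=> p _; rewrite !exprD !mulrA.
rewrite (@esumX _ _ (fun c => (k - z <= c)%N) (fun p : nat * nat => w k * r ^+ p.1 * r ^+ p.2)%R (fun c : nat => (r ^+ c)%R) (G k z)); first last.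
- by rewrite geoN ?r01.
- by move=> j; exact: rX_ge0.
- by move=> p; rewrite !mulr_ge0 ?w_ge0 ?rX_ge0.
rewrite (eq_esum (b := fun p : nat * nat => ((w k * r ^+ p.1 * G k z) * r ^+ p.2)%R%:E)); last first.
  by move=> p _; rewrite mulrAC.
rewrite (@esumX _ _ (fun c => (k - y <= c)%N) (fun a : nat => w k * r ^+ a * G k z)%R (fun c : nat => (r ^+ c)%R) (G k y)); first last.
- by rewrite geoN ?r01.
- by move=> j; exact: rX_ge0.
- by move=> p /=; rewrite mulr_ge0 ?G_ge0 // mulr_ge0 ?w_ge0 ?rX_ge0.
rewrite (eq_esum (b := fun a : nat => ((w k * G k z * G k y) * r ^+ a)%R%:E)); last first.
  by move=> a _; congr EFin; ring.
rewrite esumN; last by rewrite mulr_ge0 ?G_ge0 // mulr_ge0 ?G_ge0 ?w_ge0.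
by congr EFin; rewrite /G; ring.
Qed.

Definition V (x y z : nat) : R :=
  1 + (q - 1) * r ^+ ((1 - x) + (1 - y) + (1 - z))
    + (q - 1) * q * r ^+ ((2 - x) + (2 - y) + (2 - z)) * (1 - r ^+ 2)^-1.

Lemma r2_01 : (0 <= r ^+ 2 < 1)%R.
Proof. by rewrite exprn_ge0 ?r_ge0 //= expr_lt1 ?r_ge0 ?r_lt1. Qed.

Lemma outerE (x y z : nat) : (x <= 2)%N -> (y <= 2)%N -> (z <= 2)%N ->
  \esum_(k in [set: nat]) (w k * G k x * G k y * G k z)%:E =
  ((1 - r)^-1 ^+ 3 * V x y z)%:E.
Proof.
move=> hx hy hz.
have f0 : forall k, 0 <= (w k * G k x * G k y * G k z)%:E.
  move=> k; rewrite lee_fin; apply: mulr_ge0; last exact: G_ge0.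
  apply: mulr_ge0; last exact: G_ge0.
  by apply: mulr_ge0; [exact: w_ge0 | exact: G_ge0].
rewrite -nneseries_esumT // (nneseries_split 0 2) // add0n.
rewrite -nneseries_addn //.
rewrite (eq_eseriesr (g := fun i => ((q - 1) * q * r ^+ ((2 - x) + (2 - y) + (2 - z)) * (1 - r)^-1 ^+ 3)%R%:E * ((r ^+ 2) ^+ i)%:E)); last first.
  move=> i _; rewrite -EFinM; congr EFin.
  rewrite /G /= -!addnBA // !exprD.
  have E : (q ^+ i * r ^+ i = 1)%R by rewrite -exprMn qr expr1n.
  transitivity (((q ^+ i * r ^+ i) * ((q - 1) * q * r ^+ (2 - x) * r ^+ (2 - y) * r ^+ (2 - z) * (1 - r)^-1 ^+ 3 * (r ^+ i * r ^+ i)))%R).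
    rewrite addn2 /= !exprS; ring.
  rewrite E mul1r -exprM mulnC exprM; ring.
rewrite nneseriesZl; last by move=> i _; rewrite lee_fin exprn_ge0 // exprn_ge0 // r_ge0.
rewrite geoE ?r2_01 //.
rewrite big_ltn // big_ltn // big_geq //.
rewrite adde0 -!EFinM -!EFinD; congr EFin.
rewrite /G /V /= !sub0n !expr0 expr1 !exprD; ring.
Qed.

Lemma F_atE (x y z : nat) : (x <= 2)%N -> (y <= 2)%N -> (z <= 2)%N ->
  F_at q (x, y, z) = ((1 - r)^-1 ^+ 3 * V x y z)%R.
Proof.
by move=> hx hy hz; rewrite /F_at /= F_closed outerE.
Qed.

Lemma Ftilde_atE (x y z : nat) : (x <= 2)%N -> (y <= 2)%N -> (z <= 2)%N ->
  Ftilde_at q (x, y, z) = ((1 - r ^+ 2) * V x y z)%R.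
Proof.
move=> hx hy hz; rewrite /Ftilde_at F_atE //.
have h1 : (1 - r != 0)%R by rewrite subr_eq0 eq_sym lt_eqF // r_lt1.
have h3 : (q * r * r * r = r ^+ 2)%R by rewrite qr mul1r expr2.
rewrite h3 -!mulrA; congr (_ * _)%R.
rewrite !mulrA (_ : ((1 - r) * (1 - r) * (1 - r) = (1 - r) ^+ 3)%R); last by ring.
move: h1; move: (1 - r)%R => a ha; field; done.
Qed.

End FF.

End P4.
Import P4.

Module P5.
Set Implicit Arguments. Unset Strict Implicit.
Local Open Scope ring_scope.
Arguments mkf : simpl never.

Lemma fact_vE (R : realType) (q : R) (hq : 1 < q) b0 b1 b2 b3 b4 b5 b6 :
  fact_v q (mkf b0 b1 b2 b3 b4 b5 b6) =
  (q ^+ (b0 + (b1 + b4) + (b2 + b5) + (b3 + b6)))^-1 * V q (b1 + b4) (b2 + b5) (b3 + b6).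
Proof.
rewrite /fact_v /e0 /ee /ff !big_ord_recl big_ord0 /=.
rewrite !inordK // !mkfE //= !addnA addn0.
rewrite Ftilde_atE //; last by case: b3; case: b6.
  2: by case: b1; case: b4.
  2: by case: b2; case: b5.
have hA : 1 - q ^- 2 != 0.
  by rewrite -exprVn subr_eq0 eq_sym lt_eqF // expr_lt1 ?(r_ge0 hq) ?(r_lt1 hq).
rewrite exprVn [_ / _]mulrC -!mulrA; congr (_ * _); rewrite mulrA mulVf ?mul1r //.
Qed.

End P5.
Import P5.

Local Open Scope ring_scope.
Arguments mkf : simpl never.

Theorem mainTheorem13 (R : realType) (K : finFieldType) (mu : B7 -> int) :
  is_mu0S mu ->
  \sum_(n : B7) (mu n)%:~R * fact_v (#|K|%:R : R) n
  = \sum_(n : B7) (mu n)%:~R * dens_S R K n.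
Proof.
move=> H.
have hK : (1 < #|K|)%N.
  by apply/card_gt1P; exists 0, 1; split => //; rewrite eq_sym oner_neq0.
have hq : 1 < (#|K|%:R : R) by rewrite ltr1n.
rewrite !sumB7 /S7 /bsum.
rewrite !(muE H) !(fact_vE hq) !densE.
rewrite /Mtab /V /aa /bb /tt /t1 /=.
move: hq; set q := (#|K|%:R : R) => hq.

field.
rewrite -/q; apply/andP; split; first by rewrite gt_eqF // (lt_trans ltr01 hq).
by rewrite subr_eq0 gt_eqF // expr2; nra.
Qed.
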